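(* Let $(\mathcal{M},\mathfrak{X})$ be a model of $\mathsf{GB}^{+\infty}$ or of $\mathsf{GB}^{-\infty}$. Then for every standard $\mathcal{L}_{\mathsf{ZF}}$-formula $\varphi(x_1,\dots,x_n)$ and all elements $a_1,\dots,a_n$ of $\mathcal{M}$: $$\mathcal{M}\models\varphi(a_1,\dots,a_n)\iff(\mathcal{M},\mathfrak{X})\models\ulcorner\varphi(c_{a_1},\dots,c_{a_n})\urcorner\in\mathsf{T}_{\mathsf{Most}}.$$
   Context: Models of the two-sorted theories are written $(\mathcal{M},\mathfrak{X})$ with $\mathcal{M}$ the set sort and $\mathfrak{X}$ a collection of subsets of $M$ (the classes). $\mathsf{GB}^{+\infty}=\mathsf{GB}$ (Gödel–Bernays); $\mathsf{GB}^{-\infty}=\mathsf{GB}_{\mathsf{fin}}+\mathsf{TC}$, where $\mathsf{GB}_{\mathsf{fin}}$ replaces infinity by its negation and $\mathsf{TC}$ says transitive closures exist. Inside such a model: $c_a$ is a constant naming the set $a$; $\mathcal{L}^+_{\mathsf{ZF}}$-sentences are codes of $\varphi(c_{a_1},\dots,c_{a_n})$ with $\varphi$ an internal $\mathcal{L}_{\mathsf{ZF}}$-formula; $\mathsf{depth}(\varphi)$ is the length of the longest path in the parsing tree; $\mathsf{Depth}_k$ = formulas of depth $\le k$. A class $T$ is a $\mathsf{Depth}_k$-truth class over $(V,\in)$ if $T$ consists of sentences obtained by substituting constants $c_a$ into formulas of $\mathsf{Depth}_k$, and for such sentences: $\ulcorner c_a=c_b\urcorner\in T\leftrightarrow a=b$,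 $\ulcorner c_a\in c_b\urcorner\in T\leftrightarrow a\in b$, $\neg\psi\in T\leftrightarrow\psi\notin T$, $(\psi_1\vee\psi_2)\in T\leftrightarrow(\psi_1\in T\vee\psi_2\in T)$, $\exists v\,\psi(v)\in T\leftrightarrow\exists x\,\psi(c_x)\in T$. $\mathsf{T}_{\mathsf{Most}}(x)$ expresses: $x$ is an $\mathcal{L}^+_{\mathsf{ZF}}$-sentence $\varphi(c_{a_1},\dots,c_{a_n})$ and there exist $p\ge\mathsf{depth}(\varphi)$ and a class $T$ with $\varphi(c_{a_1},\dots,c_{a_n})\in T$ and $T$ a $\mathsf{Depth}_p$-truth class over $(V,\in)$. *)

(* Defs.v *)
(* A two-sorted model (M, X) is given by a carrier type M, a membership
   relation E : M -> M -> Prop (E z a  reads  "z ∈ a"), and a collection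
   X : (M -> Prop) -> Prop of classes (subsets of M). *)
From Stdlib Require Import List Arith.
Set Implicit Arguments.

Definition is_empty {M : Type} (E : M -> M -> Prop) (x : M) : Prop :=
  forall z, ~ E z x.
Definition is_upair {M : Type} (E : M -> M -> Prop) (a b c : M) : Prop :=
  forall z, E z c <-> (z = a \/ z = b).
Definition is_pair {M : Type} (E : M -> M -> Prop) (a b p : M) : Prop :=
  exists u v, is_upair E a a u /\ is_upair E a b v /\ is_upair E u v p.
Definition is_succ_of {M : Type} (E : M -> M -> Prop) (y x : M) : Prop :=
  forall z, E z x <-> (E z y \/ z = y).
Fixpoint is_num {M : Type} (E : M -> M -> Prop) (n : nat) (x : M) : Prop :=
  match n with
  | O => is_empty E x
  | S k => exists y, is_num E k y /\ is_succ_of E y x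
  end.
Definition transitive_set {M : Type} (E : M -> M -> Prop) (x : M) : Prop :=
  forall y z, E z y -> E y x -> E z x.
(* x is an internal natural number (finite von Neumann ordinal of M) *)
Definition is_nat {M : Type} (E : M -> M -> Prop) (x : M) : Prop :=
  transitive_set E x /\ (forall y, E y x -> transitive_set E y) /\
  (is_empty E x \/ exists y, is_succ_of E y x) /\
  (forall y, E y x -> is_empty E y \/ exists z, is_succ_of E z y).

(* Internal coding of L^+_ZF syntax (fixed convention):                *)
(*   variable v_i  ~ <0, i>   (i an internal natural number)           *)
(*   constant c_a  ~ <1, a>                                            *)
(*   t = u ~ <0,<t,u>>,  t ∈ u ~ <1,<t,u>>,  ¬y ~ <2,y>,               *)
(*   y ∨ z ~ <3,<y,z>>,  ∃v y ~ <4,<v,y>>                               *)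
Definition tagged {M : Type} (E : M -> M -> Prop) (k : nat) (u p : M) : Prop :=
  exists z, is_num E k z /\ is_pair E z u p.
Definition var_code {M : Type} (E : M -> M -> Prop) (t : M) : Prop :=
  exists i, is_nat E i /\ tagged E 0 i t.
Definition const_code {M : Type} (E : M -> M -> Prop) (a t : M) : Prop :=
  tagged E 1 a t.
Definition term_code {M : Type} (E : M -> M -> Prop) (t : M) : Prop :=
  var_code E t \/ exists a, const_code E a t.
Definition eq_code {M : Type} (E : M -> M -> Prop) (t u x : M) : Prop :=
  exists q, is_pair E t u q /\ tagged E 0 q x.
Definition mem_code {M : Type} (E : M -> M -> Prop) (t u x : M) : Prop :=
  exists q, is_pair E t u q /\ tagged E 1 q x.
Definition neg_code {M : Type} (E : M -> M -> Prop) (y x : M) : Prop :=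
  tagged E 2 y x.
Definition or_code {M : Type} (E : M -> M -> Prop) (y z x : M) : Prop :=
  exists q, is_pair E y z q /\ tagged E 3 q x.
Definition ex_code {M : Type} (E : M -> M -> Prop) (v y x : M) : Prop :=
  exists q, is_pair E v y q /\ tagged E 4 q x.
Definition atom_code {M : Type} (E : M -> M -> Prop) (x : M) : Prop :=
  exists t u, term_code E t /\ term_code E u /\ (eq_code E t u x \/ mem_code E t u x).

Definition pair_in {M : Type} (E : M -> M -> Prop) (h x d : M) : Prop :=
  exists w, E w h /\ is_pair E x d w.

(* h is a set of pairs <x, d> witnessing that x is an L^+_ZF formula whose
   parsing tree has depth <= d (atomic formulas have depth 0; a compound
   formula has depth 1 + the max depth of its immediate subformulas). *)
Definition depth_witness {M : Type} (E : M -> M -> Prop) (h : M) : Prop :=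
  forall w, E w h -> exists x d, is_pair E x d w /\ is_nat E d /\
    ( atom_code E x
    \/ (exists y d', neg_code E y x /\ E d' d /\ pair_in E h y d')
    \/ (exists y z d1 d2, or_code E y z x /\ E d1 d /\ E d2 d /\
                          pair_in E h y d1 /\ pair_in E h z d2)
    \/ (exists v y d', var_code E v /\ ex_code E v y x /\ E d' d /\ pair_in E h y d')).

Definition form_depth_le {M : Type} (E : M -> M -> Prop) (x p : M) : Prop :=
  is_nat E p /\ exists h d, depth_witness E h /\ pair_in E h x d /\ (E d p \/ d = p).

Definition is_formula {M : Type} (E : M -> M -> Prop) (x : M) : Prop :=
  exists p, form_depth_le E x p.

(* h witnesses that variable (code) v occurs free in each of its elements *)
Definition free_witness {M : Type} (E : M -> M -> Prop) (v h : M) : Prop :=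
  forall x, E x h ->
    (exists t u, (eq_code E t u x \/ mem_code E t u x) /\ (t = v \/ u = v))
    \/ (exists y, neg_code E y x /\ E y h)
    \/ (exists y z, or_code E y z x /\ (E y h \/ E z h))
    \/ (exists w y, ex_code E w y x /\ w <> v /\ E y h).
Definition free_in {M : Type} (E : M -> M -> Prop) (v x : M) : Prop :=
  exists h, free_witness E v h /\ E x h.

Definition is_sentence {M : Type} (E : M -> M -> Prop) (x : M) : Prop :=
  is_formula E x /\ ~ (exists v, var_code E v /\ free_in E v x).

(* internal substitution of the term c for the free occurrences of the
   variable v:  x' = x(c/v).  h is a set of pairs <y, y(c/v)>. *)
Definition subst_term {M : Type} (v c t t' : M) : Prop :=
  (t = v /\ t' = c) \/ (t <> v /\ t' = t).
Definition subst_witness {M : Type} (E : M -> M -> Prop) (v c h : M) : Prop :=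
  forall w, E w h -> exists x x', is_pair E x x' w /\
    ( (exists t u t' u', subst_term v c t t' /\ subst_term v c u u' /\
          ((eq_code E t u x /\ eq_code E t' u' x') \/
           (mem_code E t u x /\ mem_code E t' u' x')))
    \/ (exists y y', neg_code E y x /\ neg_code E y' x' /\ pair_in E h y y')
    \/ (exists y z y' z', or_code E y z x /\ or_code E y' z' x' /\
                          pair_in E h y y' /\ pair_in E h z z')
    \/ (exists y, ex_code E v y x /\ x' = x)
    \/ (exists u y y', ex_code E u y x /\ u <> v /\ ex_code E u y' x' /\
                       pair_in E h y y')).
Definition subst {M : Type} (E : M -> M -> Prop) (v c x x' : M) : Prop :=
  exists h, subst_witness E v c h /\ pair_in E h x x'.

Definition depth_truth_class {M : Type} (E : M -> M -> Prop) (T : M -> Prop) (p : M)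
  : Prop :=
  (forall x, T x -> is_sentence E x /\ form_depth_le E x p) /\
  (forall x, is_sentence E x -> form_depth_le E x p ->
     (forall a b ca cb, const_code E a ca -> const_code E b cb ->
        (eq_code E ca cb x -> (T x <-> a = b)) /\
        (mem_code E ca cb x -> (T x <-> E a b))) /\
     (forall y, neg_code E y x -> (T x <-> ~ T y)) /\
     (forall y z, or_code E y z x -> (T x <-> (T y \/ T z))) /\
     (forall v y, ex_code E v y x ->
        (T x <-> exists a ca y', const_code E a ca /\ subst E v ca y y' /\ T y'))).

Definition T_Most {M : Type} (E : M -> M -> Prop) (X : (M -> Prop) -> Prop) (x : M)
  : Prop :=
  is_sentence E x /\
  exists p, is_nat E p /\ form_depth_le E x p /\
    exists T, X T /\ T x /\ depth_truth_class E T p.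

Inductive fm : Type :=
| fEq : nat -> nat -> fm
| fIn : nat -> nat -> fm
| fNot : fm -> fm
| fOr : fm -> fm -> fm
| fEx : nat -> fm -> fm.

Definition upd {A : Type} (s : nat -> A) (i : nat) (a : A) : nat -> A :=
  fun j => if Nat.eqb j i then a else s j.

Fixpoint sat {M : Type} (E : M -> M -> Prop) (s : nat -> M) (f : fm) : Prop :=
  match f with
  | fEq i j => s i = s j
  | fIn i j => E (s i) (s j)
  | fNot g => ~ sat E s g
  | fOr g h => sat E s g \/ sat E s h
  | fEx i g => exists a, sat E (upd s i a) g
  end.

Inductive ctm (M : Type) : Type :=
| cVar : nat -> ctm M
| cCon : M -> ctm M.
Inductive cfm (M : Type) : Type :=
| cEq : ctm M -> ctm M -> cfm M
| cIn : ctm M -> ctm M -> cfm M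
| cNot : cfm M -> cfm M
| cOr : cfm M -> cfm M -> cfm M
| cEx : nat -> cfm M -> cfm M.
Arguments cVar {M}.
Arguments cCon {M}.

Definition inst_tm {M : Type} (s : nat -> M) (bound : list nat) (i : nat) : ctm M :=
  if existsb (Nat.eqb i) bound then cVar i else cCon (s i).
Fixpoint inst {M : Type} (s : nat -> M) (bound : list nat) (f : fm) : cfm M :=
  match f with
  | fEq i j => cEq (inst_tm s bound i) (inst_tm s bound j)
  | fIn i j => cIn (inst_tm s bound i) (inst_tm s bound j)
  | fNot g => cNot (inst s bound g)
  | fOr g h => cOr (inst s bound g) (inst s bound h)
  | fEx i g => cEx i (inst s (i :: bound) g)
  end.

Definition code_ctm {M : Type} (E : M -> M -> Prop) (t : ctm M) (c : M) : Prop :=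
  match t with
  | cVar i => exists n, is_num E i n /\ tagged E 0 n c
  | cCon a => const_code E a c
  end.
Fixpoint code_cfm {M : Type} (E : M -> M -> Prop) (f : cfm M) (x : M) : Prop :=
  match f with
  | cEq t u => exists ct cu, code_ctm E t ct /\ code_ctm E u cu /\ eq_code E ct cu x
  | cIn t u => exists ct cu, code_ctm E t ct /\ code_ctm E u cu /\ mem_code E ct cu x
  | cNot g => exists y, code_cfm E g y /\ neg_code E y x
  | cOr g h => exists y z, code_cfm E g y /\ code_cfm E h z /\ or_code E y z x
  | cEx i g => exists v y, code_ctm E (cVar i) v /\ code_cfm E g y /\ ex_code E v y x
  end.

(* Two-sorted formulas without class quantifiers (for predicative      *)
(* class comprehension).                                               *)
Inductive fm2 : Type :=
| gEq : nat -> nat -> fm2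
| gIn : nat -> nat -> fm2
| gInC : nat -> nat -> fm2
| gNot : fm2 -> fm2
| gOr : fm2 -> fm2 -> fm2
| gEx : nat -> fm2 -> fm2.

Fixpoint sat2 {M : Type} (E : M -> M -> Prop) (s : nat -> M) (c : nat -> M -> Prop)
  (f : fm2) : Prop :=
  match f with
  | gEq i j => s i = s j
  | gIn i j => E (s i) (s j)
  | gInC i k => c k (s i)
  | gNot g => ~ sat2 E s c g
  | gOr g h => sat2 E s c g \/ sat2 E s c h
  | gEx i g => exists a, sat2 E (upd s i a) c g
  end.

(* Class extensionality is automatic (classes are subsets of M).       *)
Definition GB_common {M : Type} (E : M -> M -> Prop) (X : (M -> Prop) -> Prop) : Prop :=
  (forall a b, (forall z, E z a <-> E z b) -> a = b) /\
  (forall a, X (fun z => E z a)) /\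
  (forall a b, exists c, is_upair E a b c) /\
  (forall a, exists u, forall z, E z u <-> exists y, E y a /\ E z y) /\
  (forall a, exists p, forall z, E z p <-> (forall w, E w z -> E w a)) /\
  (forall a, (exists z, E z a) -> exists z, E z a /\ forall w, E w z -> ~ E w a) /\
  (forall F, X F ->
     (forall x y y' p p', F p -> is_pair E x y p -> F p' -> is_pair E x y' p' -> y = y') ->
     forall a, exists b, forall y, E y b <-> exists x p, E x a /\ F p /\ is_pair E x y p) /\
  (forall (f : fm2) (s : nat -> M) (c : nat -> M -> Prop),
     (forall k, X (c k)) -> X (fun y => sat2 E (upd s 0 y) c f)).

Definition Infinity {M : Type} (E : M -> M -> Prop) : Prop :=
  exists w, (exists e, E e w /\ is_empty E e) /\
            (forall y, E y w -> exists z, E z w /\ is_succ_of E y z).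

Definition TC_axiom {M : Type} (E : M -> M -> Prop) : Prop :=
  forall a, exists t, (forall z, E z a -> E z t) /\ transitive_set E t /\
    (forall t', (forall z, E z a -> E z t') -> transitive_set E t' ->
       forall z, E z t -> E z t').

Definition GB_plus {M : Type} (E : M -> M -> Prop) (X : (M -> Prop) -> Prop) : Prop :=
  GB_common E X /\ Infinity E.
Definition GB_minus {M : Type} (E : M -> M -> Prop) (X : (M -> Prop) -> Prop) : Prop :=
  GB_common E X /\ ~ Infinity E /\ TC_axiom E.

(* Main.v *)
Require Import Defs.
From Stdlib Require Import List Arith Lia Classical Setoid Morphisms.
Import ListNotations.

Section Internal.
Context {M : Type} (E : M -> M -> Prop).
Hypothesis Hext : forall a b, (forall z, E z a <-> E z b) -> a = b.
Hypothesis Hpair : forall a b, exists c, is_upair E a b c.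
Hypothesis Hunion : forall a, exists u, forall z, E z u <-> exists y, E y a /\ E z y.
Hypothesis Hfound : forall a, (exists z, E z a) -> exists z, E z a /\ forall w, E w z -> ~ E w a.
Hypothesis Hempty : exists e, is_empty E e.
Set Implicit Arguments.

Lemma upair_uniq a b c c' : is_upair E a b c -> is_upair E a b c' -> c = c'.
Proof. intros H1 H2. apply Hext. intro z. rewrite (H1 z), (H2 z). tauto. Qed.

Lemma upair_eq a b a' b' c : is_upair E a b c -> is_upair E a' b' c ->
  (a = a' /\ b = b') \/ (a = b' /\ b = a').
Proof.
  intros H1 H2.
  assert (A1 : a = a' \/ a = b') by (apply H2, H1; auto).
  assert (A2 : b = a' \/ b = b') by (apply H2, H1; auto).
  assert (A3 : a' = a \/ a' = b) by (apply H1, H2; auto).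
  assert (A4 : b' = a \/ b' = b) by (apply H1, H2; auto).
  destruct A1, A2, A3, A4; subst; auto.
Qed.

Lemma pair_inj a b a' b' p : is_pair E a b p -> is_pair E a' b' p -> a = a' /\ b = b'.
Proof.
  intros [u [v [Hu [Hv Hp]]]] [u' [v' [Hu' [Hv' Hp']]]].
  destruct (upair_eq Hp Hp') as [[e1 e2]|[e1 e2]]; subst.
  - destruct (upair_eq Hu Hu') as [[e3 e4]|[e3 e4]]; subst;
    destruct (upair_eq Hv Hv') as [[e5 e6]|[e5 e6]]; subst; auto.
  - destruct (upair_eq Hu Hv') as [[e3 e4]|[e3 e4]]; subst;
    destruct (upair_eq Hv Hu') as [[e5 e6]|[e5 e6]]; subst; auto.
Qed.

Lemma pair_uniq a b p p' : is_pair E a b p -> is_pair E a b p' -> p = p'.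
Proof.
  intros [u [v [Hu [Hv Hp]]]] [u' [v' [Hu' [Hv' Hp']]]].
  rewrite (upair_uniq Hu' Hu) in Hp'. rewrite (upair_uniq Hv' Hv) in Hp'.
  exact (upair_uniq Hp Hp').
Qed.

Lemma pair_ex a b : exists p, is_pair E a b p.
Proof.
  destruct (Hpair a a) as [u Hu]. destruct (Hpair a b) as [v Hv].
  destruct (Hpair u v) as [p Hp]. exists p, u, v. auto.
Qed.

Lemma not_self a : ~ E a a.
Proof.
  intro H. destruct (Hpair a a) as [c Hc].
  destruct (Hfound c) as [z [Hz1 Hz2]]. exists a. apply Hc. auto.
  assert (z = a) by (apply Hc in Hz1; tauto). subst.
  apply (Hz2 a H). apply Hc; auto.
Qed.

Lemma bunion a b : exists u, forall z, E z u <-> E z a \/ E z b.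
Proof.
  destruct (Hpair a b) as [c Hc]. destruct (Hunion c) as [u Hu].
  exists u. intro z. rewrite (Hu z). split.
  - intros [y [Hy Hzy]]. apply Hc in Hy. destruct Hy; subst; auto.
  - intros [H|H]; [exists a|exists b]; split; auto; apply Hc; auto.
Qed.

Lemma sing w : exists u, forall z, E z u <-> z = w.
Proof. destruct (Hpair w w) as [c Hc]. exists c. intro z. rewrite (Hc z). tauto. Qed.

Lemma set3 a b w : exists u, forall z, E z u <-> E z a \/ E z b \/ z = w.
Proof.
  destruct (sing w) as [s Hs]. destruct (bunion b s) as [u1 Hu1].
  destruct (bunion a u1) as [u Hu]. exists u. intro z.
  rewrite (Hu z), (Hu1 z), (Hs z). tauto.
Qed.

Lemma set2 a w : exists u, forall z, E z u <-> E z a \/ z = w.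
Proof.
  destruct (sing w) as [s Hs]. destruct (bunion a s) as [u Hu]. exists u.
  intro z. rewrite (Hu z), (Hs z). tauto.
Qed.

Lemma succ_ex y : exists x, is_succ_of E y x.
Proof. destruct (set2 y y) as [u Hu]. exists u. exact Hu. Qed.

Lemma num_uniq k : forall n n', is_num E k n -> is_num E k n' -> n = n'.
Proof.
  induction k; simpl; intros n n' H1 H2.
  - apply Hext. intro z. split; intro H; [destruct (H1 z H)|destruct (H2 z H)].
  - destruct H1 as [y [Hy Hs]]. destruct H2 as [y' [Hy' Hs']].
    rewrite (IHk _ _ Hy Hy') in Hs. apply Hext. intro z. rewrite (Hs z), (Hs' z). tauto.
Qed.

Arguments num_uniq {k n n'}.

Lemma num_ex k : exists n, is_num E k n.
Proof.
  induction k; simpl.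
  - exact Hempty.
  - destruct IHk as [y Hy]. destruct (succ_ex y) as [x Hx]. exists x, y. auto.
Qed.

Lemma num_mem k : forall n z, is_num E k n -> E z n -> exists j, j < k /\ is_num E j z.
Proof.
  induction k; simpl; intros n z Hn Hz.
  - destruct (Hn z Hz).
  - destruct Hn as [y [Hy Hs]]. apply Hs in Hz. destruct Hz as [Hz|Hz].
    + destruct (IHk _ _ Hy Hz) as [j [Hj1 Hj2]]. exists j. split; auto.
    + subst. exists k. auto.
Qed.

Arguments num_mem {k n z}.

Lemma num_mem_rev k : forall j n z, j < k -> is_num E j z -> is_num E k n -> E z n.
Proof.
  induction k; intros j n z Hjk Hz Hn. lia.
  simpl in Hn. destruct Hn as [y [Hy Hs]]. apply Hs.
  destruct (Nat.eq_dec j k).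
  - subst. right. exact (num_uniq Hz Hy).
  - left. apply (IHk j); auto. lia.
Qed.

Arguments num_mem_rev {k j n z}.

Lemma num_inj j k n : is_num E j n -> is_num E k n -> j = k.
Proof.
  intros H1 H2. destruct (lt_eq_lt_dec j k) as [[H|H]|H]; auto.
  - exfalso. exact (not_self (num_mem_rev H H1 H2)).
  - exfalso. exact (not_self (num_mem_rev H H2 H1)).
Qed.

Arguments num_inj {j k n}.

Lemma num_trans k n : is_num E k n -> transitive_set E n.
Proof.
  intros Hn y z Hzy Hyn.
  destruct (num_mem Hn Hyn) as [j [Hj Hy]].
  destruct (num_mem Hy Hzy) as [i [Hi Hz]].
  refine (num_mem_rev _ Hz Hn). lia.
Qed.

Arguments num_trans {k n}.

Lemma num_zs k n : is_num E k n -> is_empty E n \/ exists y, is_succ_of E y n.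
Proof. destruct k; simpl; intros H; [left; auto | right; destruct H as [y [_ H]]; eauto]. Qed.

Arguments num_zs {k n}.

Lemma num_nat k n : is_num E k n -> is_nat E n.
Proof.
  intro Hn. split; [|split; [|split]].
  - exact (num_trans Hn).
  - intros y Hy. destruct (num_mem Hn Hy) as [j [_ Hj]]. exact (num_trans Hj).
  - exact (num_zs Hn).
  - intros y Hy. destruct (num_mem Hn Hy) as [j [_ Hj]]. exact (num_zs Hj).
Qed.

Arguments num_nat {k n}.

Lemma tagged_inj j k u u' p : tagged E j u p -> tagged E k u' p -> j = k /\ u = u'.
Proof.
  intros [z [Hz Hp]] [z' [Hz' Hp']].
  destruct (pair_inj Hp Hp') as [e1 e2]. subst. split; auto.
  exact (num_inj Hz Hz').
Qed.

Arguments tagged_inj {j k u u' p}.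

Lemma tagged_ex k u : exists p, tagged E k u p.
Proof.
  destruct (num_ex k) as [z Hz]. destruct (pair_ex z u) as [p Hp]. exists p, z. auto.
Qed.

Lemma tagged_uniq k u p p' : tagged E k u p -> tagged E k u p' -> p = p'.
Proof.
  intros [z [Hz Hp]] [z' [Hz' Hp']]. rewrite (num_uniq Hz' Hz) in Hp'.
  exact (pair_uniq Hp Hp').
Qed.

Arguments tagged_uniq {k u p p'}.

Lemma tag_neq j k u u' p : tagged E j u p -> tagged E k u' p -> j <> k -> False.
Proof. intros H1 H2 H. apply H. exact (proj1 (tagged_inj H1 H2)). Qed.
Arguments tag_neq {j k u u' p}.

Ltac untag := repeat match goal with
 | H : eq_code _ _ _ _ |- _ => let q := fresh "q" in destruct H as [q [? ?]]
 | H : mem_code _ _ _ _ |- _ => let q := fresh "q" in destruct H as [q [? ?]]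
 | H : or_code _ _ _ _ |- _ => let q := fresh "q" in destruct H as [q [? ?]]
 | H : ex_code _ _ _ _ |- _ => let q := fresh "q" in destruct H as [q [? ?]]
 | H : neg_code _ _ _ |- _ => unfold neg_code in H
 | H : const_code _ _ _ |- _ => unfold const_code in H
 | H : var_code _ _ |- _ => let q := fresh "i" in destruct H as [q [? ?]]
 end.
Ltac tagc := untag; match goal with H1 : tagged _ ?j _ ?x, H2 : tagged _ ?k _ ?x |- _ =>
   exfalso; apply (tag_neq H1 H2); discriminate end.

Lemma eq_dec' t u t' u' x : eq_code E t u x -> eq_code E t' u' x -> t = t' /\ u = u'.
Proof.
  intros [q [Hq Ht]] [q' [Hq' Ht']]. destruct (tagged_inj Ht Ht') as [_ e]. subst.
  exact (pair_inj Hq Hq').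
Qed.
Lemma mem_dec t u t' u' x : mem_code E t u x -> mem_code E t' u' x -> t = t' /\ u = u'.
Proof.
  intros [q [Hq Ht]] [q' [Hq' Ht']]. destruct (tagged_inj Ht Ht') as [_ e]. subst.
  exact (pair_inj Hq Hq').
Qed.
Lemma or_dec t u t' u' x : or_code E t u x -> or_code E t' u' x -> t = t' /\ u = u'.
Proof.
  intros [q [Hq Ht]] [q' [Hq' Ht']]. destruct (tagged_inj Ht Ht') as [_ e]. subst.
  exact (pair_inj Hq Hq').
Qed.
Lemma ex_dec t u t' u' x : ex_code E t u x -> ex_code E t' u' x -> t = t' /\ u = u'.
Proof.
  intros [q [Hq Ht]] [q' [Hq' Ht']]. destruct (tagged_inj Ht Ht') as [_ e]. subst.
  exact (pair_inj Hq Hq').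
Qed.
Lemma neg_dec y y' x : neg_code E y x -> neg_code E y' x -> y = y'.
Proof. intros H1 H2. exact (proj2 (tagged_inj H1 H2)). Qed.
Lemma const_dec a a' c : const_code E a c -> const_code E a' c -> a = a'.
Proof. intros H1 H2. exact (proj2 (tagged_inj H1 H2)). Qed.

Lemma ctm_uniq t c c' : code_ctm E t c -> code_ctm E t c' -> c = c'.
Proof.
  destruct t; simpl.
  - intros [m [Hn Hc]] [m' [Hn' Hc']]. rewrite (num_uniq Hn' Hn) in Hc'.
    exact (tagged_uniq Hc Hc').
  - intros H1 H2. exact (tagged_uniq H1 H2).
Qed.

Arguments ctm_uniq {t c c'}.

Lemma var_inj i j c : code_ctm E (cVar i) c -> code_ctm E (cVar j) c -> i = j.
Proof.
  simpl. intros [n [Hn Hc]] [n' [Hn' Hc']].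
  destruct (tagged_inj Hc Hc') as [_ e]. subst. exact (num_inj Hn Hn').
Qed.

Arguments var_inj {i j c}.

Lemma ctm_ex t : exists c, code_ctm E t c.
Proof.
  destruct t; simpl.
  - destruct (num_ex n) as [z Hz]. destruct (tagged_ex 0 z) as [c Hc]. eauto.
  - apply tagged_ex.
Qed.

Lemma ctm_term t c : code_ctm E t c -> term_code E c.
Proof.
  destruct t; simpl.
  - intros [z [Hz Hc]]. left. exists z. split; auto. exact (num_nat Hz).
  - intros H. right. eauto.
Qed.

Arguments ctm_term {t c}.

Lemma cfm_ex f : exists x, code_cfm E f x.
Proof.
  induction f; simpl.
  - destruct (ctm_ex c) as [ct Ht]. destruct (ctm_ex c0) as [cu Hu].
    destruct (pair_ex ct cu) as [q Hq]. destruct (tagged_ex 0 q) as [x Hx].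
    exists x, ct, cu. repeat split; auto. exists q; auto.
  - destruct (ctm_ex c) as [ct Ht]. destruct (ctm_ex c0) as [cu Hu].
    destruct (pair_ex ct cu) as [q Hq]. destruct (tagged_ex 1 q) as [x Hx].
    exists x, ct, cu. repeat split; auto. exists q; auto.
  - destruct IHf as [y Hy]. destruct (tagged_ex 2 y) as [x Hx]. exists x, y. auto.
  - destruct IHf1 as [y Hy]. destruct IHf2 as [z Hz].
    destruct (pair_ex y z) as [q Hq]. destruct (tagged_ex 3 q) as [x Hx].
    exists x, y, z. repeat split; auto. exists q; auto.
  - destruct IHf as [y Hy]. destruct (ctm_ex (cVar n)) as [v Hv].
    destruct (pair_ex v y) as [q Hq]. destruct (tagged_ex 4 q) as [x Hx].
    exists x, v, y. repeat split; auto. exists q; auto.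
Qed.

Lemma cfm_uniq f : forall x x', code_cfm E f x -> code_cfm E f x' -> x = x'.
Proof.
  induction f; simpl; intros x x'.
  - intros [ct [cu [Ht [Hu [q [Hq Hx]]]]]] [ct' [cu' [Ht' [Hu' [q' [Hq' Hx']]]]]].
    rewrite (ctm_uniq Ht' Ht), (ctm_uniq Hu' Hu) in Hq'. rewrite (pair_uniq Hq' Hq) in Hx'.
    exact (tagged_uniq Hx Hx').
  - intros [ct [cu [Ht [Hu [q [Hq Hx]]]]]] [ct' [cu' [Ht' [Hu' [q' [Hq' Hx']]]]]].
    rewrite (ctm_uniq Ht' Ht), (ctm_uniq Hu' Hu) in Hq'. rewrite (pair_uniq Hq' Hq) in Hx'.
    exact (tagged_uniq Hx Hx').
  - intros [y [Hy Hx]] [y' [Hy' Hx']]. rewrite (IHf _ _ Hy' Hy) in Hx'.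
    exact (tagged_uniq Hx Hx').
  - intros [y [z [Hy [Hz [q [Hq Hx]]]]]] [y' [z' [Hy' [Hz' [q' [Hq' Hx']]]]]].
    rewrite (IHf1 _ _ Hy' Hy), (IHf2 _ _ Hz' Hz) in Hq'. rewrite (pair_uniq Hq' Hq) in Hx'.
    exact (tagged_uniq Hx Hx').
  - intros [v [y [Hv [Hy [q [Hq Hx]]]]]] [v' [y' [Hv' [Hy' [q' [Hq' Hx']]]]]].
    rewrite (@ctm_uniq (cVar n) _ _ Hv' Hv), (IHf _ _ Hy' Hy) in Hq'. rewrite (pair_uniq Hq' Hq) in Hx'.
    exact (tagged_uniq Hx Hx').
Qed.

Arguments cfm_uniq {f x x'}.

Definition DWC (h w : M) : Prop :=
  exists x d, is_pair E x d w /\ is_nat E d /\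
    ( atom_code E x
    \/ (exists y d', neg_code E y x /\ E d' d /\ pair_in E h y d')
    \/ (exists y z d1 d2, or_code E y z x /\ E d1 d /\ E d2 d /\
                          pair_in E h y d1 /\ pair_in E h z d2)
    \/ (exists v y d', var_code E v /\ ex_code E v y x /\ E d' d /\ pair_in E h y d')).

Lemma dw_iff h : depth_witness E h <-> forall w, E w h -> DWC h w.
Proof. reflexivity. Qed.

Definition SWC (v c h w : M) : Prop :=
  exists x x', is_pair E x x' w /\
    ( (exists t u t' u', subst_term v c t t' /\ subst_term v c u u' /\
          ((eq_code E t u x /\ eq_code E t' u' x') \/
           (mem_code E t u x /\ mem_code E t' u' x')))
    \/ (exists y y', neg_code E y x /\ neg_code E y' x' /\ pair_in E h y y')
    \/ (exists y z y' z', or_code E y z x /\ or_code E y' z' x' /\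
                          pair_in E h y y' /\ pair_in E h z z')
    \/ (exists y, ex_code E v y x /\ x' = x)
    \/ (exists u y y', ex_code E u y x /\ u <> v /\ ex_code E u y' x' /\
                       pair_in E h y y')).

Lemma sw_iff v c h : subst_witness E v c h <-> forall w, E w h -> SWC v c h w.
Proof. reflexivity. Qed.

Lemma pair_in_mono h h' x d : (forall z, E z h -> E z h') -> pair_in E h x d -> pair_in E h' x d.
Proof. intros Hs [w [Hw Hp]]. exists w. auto. Qed.

Lemma DWC_mono h h' w : (forall z, E z h -> E z h') -> DWC h w -> DWC h' w.
Proof.
  intros Hs [x [d [Hp [Hd C]]]]. exists x, d. split; [auto|split; [auto|]].
  destruct C as [C|[C|[C|C]]].
  - left; auto.
  - right; left. destruct C as [y [d' [A [B D]]]]. exists y, d'. repeat split; auto.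
    eapply pair_in_mono; eauto.
  - right; right; left. destruct C as [y [z [d1 [d2 [A [B [D [F G]]]]]]]].
    exists y, z, d1, d2. repeat split; auto; eapply pair_in_mono; eauto.
  - right; right; right. destruct C as [v [y [d' [A [B [D F]]]]]].
    exists v, y, d'. repeat split; auto. eapply pair_in_mono; eauto.
Qed.

Lemma SWC_mono v c h h' w : (forall z, E z h -> E z h') -> SWC v c h w -> SWC v c h' w.
Proof.
  intros Hs [x [x' [Hp C]]]. exists x, x'. split; [auto|].
  destruct C as [C|[C|[C|[C|C]]]].
  - left; auto.
  - right; left. destruct C as [y [y' [A [B D]]]]. exists y, y'. repeat split; auto.
    eapply pair_in_mono; eauto.
  - right; right; left. destruct C as [y [z [y' [z' [A [B [D F]]]]]]].
    exists y, z, y', z'. repeat split; auto; eapply pair_in_mono; eauto.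
  - right; right; right; left. auto.
  - right; right; right; right. destruct C as [u [y [y' [A [B [D F]]]]]].
    exists u, y, y'. repeat split; auto. eapply pair_in_mono; eauto.
Qed.

Lemma dw_at h x d : depth_witness E h -> pair_in E h x d ->
  is_nat E d /\
    ( atom_code E x
    \/ (exists y d', neg_code E y x /\ E d' d /\ pair_in E h y d')
    \/ (exists y z d1 d2, or_code E y z x /\ E d1 d /\ E d2 d /\
                          pair_in E h y d1 /\ pair_in E h z d2)
    \/ (exists v y d', var_code E v /\ ex_code E v y x /\ E d' d /\ pair_in E h y d')).
Proof.
  intros Hh [w [Hw Hp]]. destruct (Hh w Hw) as [x0 [d0 [Hp0 R]]].
  destruct (pair_inj Hp0 Hp). subst. exact R.
Qed.

Lemma sw_at v c h x x' : subst_witness E v c h -> pair_in E h x x' ->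
    ( (exists t u t' u', subst_term v c t t' /\ subst_term v c u u' /\
          ((eq_code E t u x /\ eq_code E t' u' x') \/
           (mem_code E t u x /\ mem_code E t' u' x')))
    \/ (exists y y', neg_code E y x /\ neg_code E y' x' /\ pair_in E h y y')
    \/ (exists y z y' z', or_code E y z x /\ or_code E y' z' x' /\
                          pair_in E h y y' /\ pair_in E h z z')
    \/ (exists y, ex_code E v y x /\ x' = x)
    \/ (exists u y y', ex_code E u y x /\ u <> v /\ ex_code E u y' x' /\
                       pair_in E h y y')).
Proof.
  intros Hh [w [Hw Hp]]. destruct (Hh w Hw) as [x0 [x0' [Hp0 R]]].
  destruct (pair_inj Hp0 Hp). subst. exact R.
Qed.

Lemma dw_neg h x d y : depth_witness E h -> pair_in E h x d -> neg_code E y x ->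
  exists d', E d' d /\ pair_in E h y d'.
Proof.
  intros Hh Hx Hn. destruct (dw_at Hh Hx) as [_ [C|[C|[C|C]]]].
  - destruct C as [t [u [_ [_ [C|C]]]]]; tagc.
  - destruct C as [y0 [d' [A [B D]]]]. rewrite (neg_dec Hn A). eauto.
  - destruct C as [y0 [z0 [d1 [d2 [A _]]]]]; tagc.
  - destruct C as [v0 [y0 [d' [_ [A _]]]]]; tagc.
Qed.

Lemma dw_or h x d y z : depth_witness E h -> pair_in E h x d -> or_code E y z x ->
  exists d1 d2, E d1 d /\ E d2 d /\ pair_in E h y d1 /\ pair_in E h z d2.
Proof.
  intros Hh Hx Hn. destruct (dw_at Hh Hx) as [_ [C|[C|[C|C]]]].
  - destruct C as [t [u [_ [_ [C|C]]]]]; tagc.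
  - destruct C as [y0 [d' [A [B D]]]]; tagc.
  - destruct C as [y0 [z0 [d1 [d2 [A [B [C [D F]]]]]]]].
    destruct (or_dec Hn A). subst. exists d1, d2. auto.
  - destruct C as [v0 [y0 [d' [_ [A _]]]]]; tagc.
Qed.

Lemma dw_ex h x d v y : depth_witness E h -> pair_in E h x d -> ex_code E v y x ->
  exists d', var_code E v /\ E d' d /\ pair_in E h y d'.
Proof.
  intros Hh Hx Hn. destruct (dw_at Hh Hx) as [_ [C|[C|[C|C]]]].
  - destruct C as [t [u [_ [_ [C|C]]]]]; tagc.
  - destruct C as [y0 [d' [A [B D]]]]; tagc.
  - destruct C as [y0 [z0 [d1 [d2 [A _]]]]]; tagc.
  - destruct C as [v0 [y0 [d' [A [B [C D]]]]]].
    destruct (ex_dec Hn B). subst. eauto.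
Qed.

Lemma fdl_neg x p y : form_depth_le E x p -> neg_code E y x -> form_depth_le E y p.
Proof.
  intros [Hp [h [d [Hh [Hx Hd]]]]] Hn. split; auto.
  destruct (dw_neg Hh Hx Hn) as [d' [A B]]. exists h, d'. repeat split; auto.
  left. destruct Hd as [Hd|Hd]; [exact (proj1 Hp _ _ A Hd)|subst; auto].
Qed.

Lemma fdl_or x p y z : form_depth_le E x p -> or_code E y z x ->
  form_depth_le E y p /\ form_depth_le E z p.
Proof.
  intros [Hp [h [d [Hh [Hx Hd]]]]] Hn.
  destruct (dw_or Hh Hx Hn) as [d1 [d2 [A [B [C D]]]]]. split; split; auto.
  - exists h, d1. repeat split; auto.
    left. destruct Hd as [Hd|Hd]; [exact (proj1 Hp _ _ A Hd)|subst; auto].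
  - exists h, d2. repeat split; auto.
    left. destruct Hd as [Hd|Hd]; [exact (proj1 Hp _ _ B Hd)|subst; auto].
Qed.

Lemma fdl_ex x p v y : form_depth_le E x p -> ex_code E v y x -> form_depth_le E y p.
Proof.
  intros [Hp [h [d [Hh [Hx Hd]]]]] Hn. split; auto.
  destruct (dw_ex Hh Hx Hn) as [d' [_ [A B]]]. exists h, d'. repeat split; auto.
  left. destruct Hd as [Hd|Hd]; [exact (proj1 Hp _ _ A Hd)|subst; auto].
Qed.

Fixpoint md (f : cfm M) : nat :=
  match f with
  | cEq _ _ | cIn _ _ => 0
  | cNot g => S (md g)
  | cOr g h => S (Nat.max (md g) (md h))
  | cEx _ g => S (md g)
  end.

Lemma dw_build h1 h2 w h : depth_witness E h1 -> depth_witness E h2 ->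
  (forall z, E z h <-> E z h1 \/ E z h2 \/ z = w) -> DWC h w -> depth_witness E h.
Proof.
  intros H1 H2 Hh Hw z Hz. apply Hh in Hz. destruct Hz as [Hz|[Hz|Hz]].
  - apply (DWC_mono (h:=h1)). intros u Hu; apply Hh; auto. exact (H1 z Hz).
  - apply (DWC_mono (h:=h2)). intros u Hu; apply Hh; auto. exact (H2 z Hz).
  - subst; auto.
Qed.

Lemma dw_empty e : is_empty E e -> depth_witness E e.
Proof. intros He w Hw. destruct (He w Hw). Qed.

Lemma dw_new h1 h2 x d :
  depth_witness E h1 -> depth_witness E h2 ->
  (forall h w, (forall z, E z h <-> E z h1 \/ E z h2 \/ z = w) -> is_pair E x d w -> DWC h w) ->
  exists h, depth_witness E h /\ pair_in E h x d /\ (forall z, E z h1 -> E z h) /\ (forall z, E z h2 -> E z h).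
Proof.
  intros H1 H2 HC. destruct (pair_ex x d) as [w Hw]. destruct (set3 h1 h2 w) as [h Hh].
  exists h. split; [|split; [|split]].
  - apply (dw_build H1 H2 Hh). apply HC; auto.
  - exists w. split; auto. apply Hh; auto.
  - intros z Hz; apply Hh; auto.
  - intros z Hz; apply Hh; auto.
Qed.

Lemma var_of_code i v : code_ctm E (cVar i) v -> var_code E v.
Proof. simpl. intros [m [Hm Hv]]. exists m. split; auto. exact (num_nat Hm). Qed.

Lemma atom_of_eq ct cu x : term_code E ct -> term_code E cu -> eq_code E ct cu x -> atom_code E x.
Proof. intros; exists ct, cu; auto. Qed.
Lemma atom_of_mem ct cu x : term_code E ct -> term_code E cu -> mem_code E ct cu x -> atom_code E x.
Proof. intros; exists ct, cu; auto. Qed.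

Lemma dw_atom x d : atom_code E x -> is_nat E d -> exists h, depth_witness E h /\ pair_in E h x d.
Proof.
  intros Ha Hd. destruct Hempty as [e He].
  destruct (dw_new (x:=x) (d:=d) (dw_empty He) (dw_empty He)) as [h [A [B _]]].
  - intros h w _ Hw. exists x, d. split; [auto|split; [auto|left; exact Ha]].
  - eauto.
Qed.

Lemma canon f : forall x n, code_cfm E f x -> is_num E (md f) n ->
  exists h, depth_witness E h /\ pair_in E h x n.
Proof.
  induction f as [c1 c2|c1 c2|f IHf|f1 IHf1 f2 IHf2|k f IHf]; cbn [code_cfm md]; intros x n Hx Hn.
  - destruct Hx as [ct [cu [Ht [Hu Hx]]]]. apply dw_atom.
    + exact (atom_of_eq (ctm_term Ht) (ctm_term Hu) Hx).
    + exact (num_nat Hn).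
  - destruct Hx as [ct [cu [Ht [Hu Hx]]]]. apply dw_atom.
    + exact (atom_of_mem (ctm_term Ht) (ctm_term Hu) Hx).
    + exact (num_nat Hn).
  - destruct Hx as [y [Hy Hx]]. destruct Hn as [ny [Hny Hs]].
    destruct (IHf _ _ Hy Hny) as [h1 [H1 P1]].
    destruct (dw_new (x:=x) (d:=n) H1 H1) as [h [A [B _]]]; eauto.
    intros h w Hh Hw. exists x, n. split; auto. split. exact (num_nat (k:=S (md f)) (ex_intro _ ny (conj Hny Hs))).
    right; left. exists y, ny. repeat split; auto.
    + apply Hs; auto.
    + eapply pair_in_mono; [|exact P1]. intros z Hz; apply Hh; auto.
  - destruct Hx as [y [z [Hy [Hz Hx]]]].
    assert (Hn' := Hn). destruct Hn as [nm [Hnm Hs]].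
    destruct (num_ex (md f1)) as [n1 Hn1]. destruct (num_ex (md f2)) as [n2 Hn2].
    destruct (IHf1 _ _ Hy Hn1) as [h1 [H1 P1]].
    destruct (IHf2 _ _ Hz Hn2) as [h2 [H2 P2]].
    destruct (dw_new (x:=x) (d:=n) H1 H2) as [h [A [B _]]]; eauto.
    intros h w Hh Hw. exists x, n. split; auto. split. exact (num_nat Hn').
    right; right; left. exists y, z, n1, n2. repeat split; auto.
    + refine (num_mem_rev _ Hn1 Hn'). lia.
    + refine (num_mem_rev _ Hn2 Hn'). lia.
    + eapply pair_in_mono; [|exact P1]. intros u Hu; apply Hh; auto.
    + eapply pair_in_mono; [|exact P2]. intros u Hu; apply Hh; auto.
  - destruct Hx as [v [y [Hv [Hy Hx]]]].
    assert (Hn' := Hn). destruct Hn as [ny [Hny Hs]].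
    destruct (IHf _ _ Hy Hny) as [h1 [H1 P1]].
    destruct (dw_new (x:=x) (d:=n) H1 H1) as [h [A [B _]]]; eauto.
    intros h w Hh Hw. exists x, n. split; auto. split. exact (num_nat Hn').
    right; right; right. exists v, y, ny. repeat split; auto.
    + exact (var_of_code (i:=k) Hv).
    + apply Hs; auto.
    + eapply pair_in_mono; [|exact P1]. intros u Hu; apply Hh; auto.
Qed.

Arguments canon {f x n}.

Lemma code_fdl f x : code_cfm E f x -> exists n, is_num E (md f) n /\ form_depth_le E x n.
Proof.
  intro Hx. destruct (num_ex (md f)) as [n Hn]. exists n. split; auto.
  destruct (canon Hx Hn) as [h [A B]]. split. exact (num_nat Hn).
  exists h, n. auto.
Qed.

Arguments code_fdl {f x}.

Lemma inst_tm_cases (s : nat -> M) b i :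
  (In i b /\ inst_tm s b i = cVar i) \/ (~ In i b /\ inst_tm s b i = cCon (s i)).
Proof.
  unfold inst_tm. destruct (existsb (Nat.eqb i) b) eqn:H.
  - left. split; auto. apply existsb_exists in H. destruct H as [j [Hj Hij]].
    apply Nat.eqb_eq in Hij. subst; auto.
  - right. split; auto. intro Hi. assert (existsb (Nat.eqb i) b = true).
    { apply existsb_exists. exists i. split; auto. apply Nat.eqb_refl. }
    congruence.
Qed.

Lemma tm_free (s : nat -> M) b i ct v : code_ctm E (inst_tm s b i) ct -> var_code E v -> ct = v ->
  exists j, In j b /\ code_ctm E (cVar j) v.
Proof.
  intros Ht Hv e. subst. destruct (inst_tm_cases s b i) as [[A B]|[A B]]; rewrite B in Ht.
  - eauto.
  - simpl in Ht. tagc.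
Qed.

Arguments tm_free {s b i ct v}.

Lemma nofree f : forall (s : nat -> M) b x, code_cfm E (inst s b f) x ->
  forall v h, free_witness E v h -> E x h -> var_code E v ->
  exists j, In j b /\ code_ctm E (cVar j) v.
Proof.
  induction f; simpl; intros s b x Hx v h Hh Hxh Hv; destruct (Hh x Hxh) as [C|[C|[C|C]]].
  - destruct Hx as [ct [cu [Ht [Hu Hx]]]].
    destruct C as [t [u [[C|C] D]]]; [|tagc].
    destruct (eq_dec' Hx C). subst. destruct D as [D|D].
    + exact (tm_free Ht Hv D).
    + exact (tm_free Hu Hv D).
  - destruct C as [y [C _]]. destruct Hx as [ct [cu [_ [_ Hx]]]]. tagc.
  - destruct C as [y [z [C _]]]. destruct Hx as [ct [cu [_ [_ Hx]]]]. tagc.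
  - destruct C as [w [y [C _]]]. destruct Hx as [ct [cu [_ [_ Hx]]]]. tagc.
  - destruct Hx as [ct [cu [Ht [Hu Hx]]]].
    destruct C as [t [u [[C|C] D]]]; [tagc|].
    destruct (mem_dec Hx C). subst. destruct D as [D|D].
    + exact (tm_free Ht Hv D).
    + exact (tm_free Hu Hv D).
  - destruct C as [y [C _]]. destruct Hx as [ct [cu [_ [_ Hx]]]]. tagc.
  - destruct C as [y [z [C _]]]. destruct Hx as [ct [cu [_ [_ Hx]]]]. tagc.
  - destruct C as [w [y [C _]]]. destruct Hx as [ct [cu [_ [_ Hx]]]]. tagc.
  - destruct Hx as [y [_ Hx]]. destruct C as [t [u [[C|C] D]]]; tagc.
  - destruct Hx as [y [Hy Hx]]. destruct C as [y0 [C D]].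
    rewrite <- (neg_dec Hx C) in D. exact (IHf _ _ _ Hy _ _ Hh D Hv).
  - destruct Hx as [y [_ Hx]]. destruct C as [y0 [z0 [C _]]]. tagc.
  - destruct Hx as [y [_ Hx]]. destruct C as [w [y0 [C _]]]. tagc.
  - destruct Hx as [y [z [_ [_ Hx]]]]. destruct C as [t [u [[C|C] D]]]; tagc.
  - destruct Hx as [y [z [_ [_ Hx]]]]. destruct C as [y0 [C _]]. tagc.
  - destruct Hx as [y [z [Hy [Hz Hx]]]]. destruct C as [y0 [z0 [C D]]].
    destruct (or_dec Hx C). subst. destruct D as [D|D].
    + exact (IHf1 _ _ _ Hy _ _ Hh D Hv).
    + exact (IHf2 _ _ _ Hz _ _ Hh D Hv).
  - destruct Hx as [y [z [_ [_ Hx]]]]. destruct C as [w [y0 [C _]]]. tagc.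
  - destruct Hx as [w [y [_ [_ Hx]]]]. destruct C as [t [u [[C|C] D]]]; tagc.
  - destruct Hx as [w [y [_ [_ Hx]]]]. destruct C as [y0 [C _]]. tagc.
  - destruct Hx as [w [y [_ [_ Hx]]]]. destruct C as [y0 [z0 [C _]]]. tagc.
  - destruct Hx as [w [y [Hw [Hy Hx]]]]. destruct C as [w0 [y0 [C [D F]]]].
    destruct (ex_dec Hx C). subst.
    destruct (IHf _ _ _ Hy _ _ Hh F Hv) as [j [Hj Hcj]].
    destruct Hj as [Hj|Hj].
    + subst. exfalso. apply D. exact (@ctm_uniq (cVar j) _ _ Hw Hcj).
    + eauto.
Qed.

Arguments nofree {f s b x} _ {v h}.

Lemma code_sentence f (s : nat -> M) x : code_cfm E (inst s nil f) x -> is_sentence E x.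
Proof.
  intro Hx. split.
  - destruct (code_fdl Hx) as [n [_ H]]. exists n; exact H.
  - intros [v [Hv [h [Hh Hxh]]]]. destruct (nofree Hx Hh Hxh Hv) as [j [Hj _]]. destruct Hj.
Qed.
Arguments code_sentence {f s x}.

Fixpoint shape (f g : cfm M) : Prop :=
  match f, g with
  | cEq _ _, cEq _ _ => True
  | cIn _ _, cIn _ _ => True
  | cNot f1, cNot g1 => shape f1 g1
  | cOr f1 f2, cOr g1 g2 => shape f1 g1 /\ shape f2 g2
  | cEx _ f1, cEx _ g1 => shape f1 g1
  | _, _ => False
  end.

Lemma inst_shape g : forall (s s' : nat -> M) b b', shape (inst s b g) (inst s' b' g).
Proof. induction g; simpl; auto. Qed.

Lemma shape_dw f : forall g x x' h d, shape f g -> code_cfm E f x -> code_cfm E g x' ->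
  depth_witness E h -> pair_in E h x d -> exists h', depth_witness E h' /\ pair_in E h' x' d.
Proof.
  induction f as [c1 c2|c1 c2|f IHf|f1 IHf1 f2 IHf2|k f IHf];
    destruct g as [e1 e2|e1 e2|g|g1 g2|k' g]; cbn [shape code_cfm];
    intros x x' h d Hs Hx Hx' Hh Hxd; try contradiction;
    destruct (dw_at Hh Hxd) as [Hd _].
  - destruct Hx' as [ct [cu [Ht [Hu Hx']]]]. apply dw_atom; auto.
    exact (atom_of_eq (ctm_term Ht) (ctm_term Hu) Hx').
  - destruct Hx' as [ct [cu [Ht [Hu Hx']]]]. apply dw_atom; auto.
    exact (atom_of_mem (ctm_term Ht) (ctm_term Hu) Hx').
  - destruct Hx as [y [Hy Hx]]. destruct Hx' as [y' [Hy' Hx']].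
    destruct (dw_neg Hh Hxd Hx) as [d' [A B]].
    destruct (IHf _ _ _ _ _ Hs Hy Hy' Hh B) as [h1 [H1 P1]].
    destruct (dw_new (x:=x') (d:=d) H1 H1) as [h' [A' [B' _]]]; eauto.
    intros h0 w Hh0 Hw. exists x', d. split; auto. split; auto.
    right; left. exists y', d'. repeat split; auto.
    eapply pair_in_mono; [|exact P1]. intros u Hu; apply Hh0; auto.
  - destruct Hx as [y [z [Hy [Hz Hx]]]]. destruct Hx' as [y' [z' [Hy' [Hz' Hx']]]].
    destruct Hs as [Hs1 Hs2].
    destruct (dw_or Hh Hxd Hx) as [d1 [d2 [A [B [C D]]]]].
    destruct (IHf1 _ _ _ _ _ Hs1 Hy Hy' Hh C) as [h1 [H1 P1]].
    destruct (IHf2 _ _ _ _ _ Hs2 Hz Hz' Hh D) as [h2 [H2 P2]].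
    destruct (dw_new (x:=x') (d:=d) H1 H2) as [h' [A' [B' _]]]; eauto.
    intros h0 w Hh0 Hw. exists x', d. split; auto. split; auto.
    right; right; left. exists y', z', d1, d2. repeat split; auto.
    + eapply pair_in_mono; [|exact P1]. intros u Hu; apply Hh0; auto.
    + eapply pair_in_mono; [|exact P2]. intros u Hu; apply Hh0; auto.
  - destruct Hx as [v [y [Hv [Hy Hx]]]]. destruct Hx' as [v' [y' [Hv' [Hy' Hx']]]].
    destruct (dw_ex Hh Hxd Hx) as [d' [_ [A B]]].
    destruct (IHf _ _ _ _ _ Hs Hy Hy' Hh B) as [h1 [H1 P1]].
    destruct (dw_new (x:=x') (d:=d) H1 H1) as [h' [A' [B' _]]]; eauto.
    intros h0 w Hh0 Hw. exists x', d. split; auto. split; auto.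
    right; right; right. exists v', y', d'. repeat split; auto.
    + exact (var_of_code (i:=k') Hv').
    + eapply pair_in_mono; [|exact P1]. intros u Hu; apply Hh0; auto.
Qed.

Arguments shape_dw {f g x x' h d}.

Lemma shape_fdl f g x x' p : shape f g -> code_cfm E f x -> code_cfm E g x' ->
  form_depth_le E x p -> form_depth_le E x' p.
Proof.
  intros Hs Hx Hx' [Hp [h [d [Hh [Hxd Hd]]]]]. split; auto.
  destruct (shape_dw Hs Hx Hx' Hh Hxd) as [h' [A B]]. exists h', d. auto.
Qed.

Arguments shape_fdl {f g x x' p}.

Lemma In_remove_iff (b : list nat) i j : In j (remove Nat.eq_dec i b) <-> In j b /\ j <> i.
Proof.
  split.
  - intro H. exact (in_remove _ _ _ _ H).
  - intros [A B]. apply in_in_remove; auto.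
Qed.

Lemma upd_eq (s : nat -> M) i a : upd s i a i = a.
Proof. unfold upd. rewrite Nat.eqb_refl. auto. Qed.
Lemma upd_neq (s : nat -> M) i a j : j <> i -> upd s i a j = s j.
Proof. intro H. unfold upd. apply Nat.eqb_neq in H. rewrite H. auto. Qed.

Lemma inst_ext g : forall (s s' : nat -> M) b b', (forall j, In j b <-> In j b') ->
  (forall j, ~ In j b -> s j = s' j) -> inst s b g = inst s' b' g.
Proof.
  assert (Htm : forall (s s' : nat -> M) b b' j, (forall j, In j b <-> In j b') ->
    (forall j, ~ In j b -> s j = s' j) -> inst_tm s b j = inst_tm s' b' j).
  { intros s s' b b' j H1 H2.
    destruct (inst_tm_cases s b j) as [[A B]|[A B]];
    destruct (inst_tm_cases s' b' j) as [[A' B']|[A' B']]; rewrite B, B'; auto.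
    - exfalso. apply A'. apply H1; auto.
    - exfalso. apply A. apply H1; auto.
    - rewrite (H2 j A); auto. }
  induction g; simpl; intros s s' b b' H1 H2.
  - rewrite (Htm s s' b b' n H1 H2), (Htm s s' b b' n0 H1 H2); auto.
  - rewrite (Htm s s' b b' n H1 H2), (Htm s s' b b' n0 H1 H2); auto.
  - rewrite (IHg s s' b b' H1 H2); auto.
  - rewrite (IHg1 s s' b b' H1 H2), (IHg2 s s' b b' H1 H2); auto.
  - rewrite (IHg s s' (n :: b) (n :: b')); auto.
    + intro j; simpl; rewrite (H1 j); tauto.
    + intros j Hj. apply H2. intro; apply Hj; simpl; auto.
Qed.

Lemma tm_subst (s : nat -> M) b j i a t v ca t' : In i b -> code_ctm E (inst_tm s b j) t ->
  code_ctm E (cVar i) v -> const_code E a ca -> subst_term v ca t t' ->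
  code_ctm E (inst_tm (upd s i a) (remove Nat.eq_dec i b) j) t'.
Proof.
  intros Hi Ht Hv Hc Hst.
  destruct (inst_tm_cases s b j) as [[A B]|[A B]]; rewrite B in Ht.
  - destruct (Nat.eq_dec j i) as [e|e].
    + subst. rewrite (ctm_uniq Ht Hv) in Hst.
      destruct Hst as [[_ e]|[e _]]; [|congruence]. subst.
      destruct (inst_tm_cases (upd s i a) (remove Nat.eq_dec i b) i) as [[A' B']|[A' B']];
        rewrite B'.
      * exfalso. apply In_remove_iff in A'. tauto.
      * simpl. rewrite upd_eq. auto.
    + assert (t <> v). { intro ee; subst. apply e. exact (var_inj Ht Hv). }
      destruct Hst as [[ee _]|[_ ee]]; [congruence|]. subst.
      destruct (inst_tm_cases (upd s i a) (remove Nat.eq_dec i b) j) as [[A' B']|[A' B']];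
        rewrite B'; auto.
      exfalso. apply A'. apply In_remove_iff; auto.
  - assert (t <> v). { intro ee; subst. simpl in Ht. apply var_of_code in Hv. tagc. }
    destruct Hst as [[ee _]|[_ ee]]; [congruence|]. subst.
    destruct (inst_tm_cases (upd s i a) (remove Nat.eq_dec i b) j) as [[A' B']|[A' B']];
      rewrite B'.
    + exfalso. apply In_remove_iff in A'. tauto.
    + rewrite upd_neq; auto. intro; subst; auto.
Qed.

Arguments tm_subst {s b j i a t v ca t'}.

Section Subst.
Variables (i : nat) (a v ca : M).
Hypothesis Hv : code_ctm E (cVar i) v.
Hypothesis Hca : const_code E a ca.

Lemma subst_sound g : forall (s : nat -> M) b y h y', In i b -> code_cfm E (inst s b g) y ->
  subst_witness E v ca h -> pair_in E h y y' ->
  code_cfm E (inst (upd s i a) (remove Nat.eq_dec i b) g) y'.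
Proof.
  induction g as [j k|j k|g IHg|g1 IHg1 g2 IHg2|k g IHg]; cbn [inst code_cfm];
    intros s b y h y' Hi Hy Hh Hyy; destruct (sw_at Hh Hyy) as [C|[C|[C|[C|C]]]].
  - destruct Hy as [ct [cu [Ht [Hu Hy]]]].
    destruct C as [t [u [t' [u' [S1 [S2 [[C D]|[C D]]]]]]]]; [|tagc].
    destruct (eq_dec' Hy C). subst. exists t', u'. repeat split; auto.
    + exact (tm_subst Hi Ht Hv Hca S1).
    + exact (tm_subst Hi Hu Hv Hca S2).
  - destruct Hy as [ct [cu [_ [_ Hy]]]]. destruct C as [y0 [y0' [C _]]]. tagc.
  - destruct Hy as [ct [cu [_ [_ Hy]]]]. destruct C as [y0 [z0 [y0' [z0' [C _]]]]]. tagc.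
  - destruct Hy as [ct [cu [_ [_ Hy]]]]. destruct C as [y0 [C _]]. tagc.
  - destruct Hy as [ct [cu [_ [_ Hy]]]]. destruct C as [u0 [y0 [y0' [C _]]]]. tagc.
  - destruct Hy as [ct [cu [Ht [Hu Hy]]]].
    destruct C as [t [u [t' [u' [S1 [S2 [[C D]|[C D]]]]]]]]; [tagc|].
    destruct (mem_dec Hy C). subst. exists t', u'. repeat split; auto.
    + exact (tm_subst Hi Ht Hv Hca S1).
    + exact (tm_subst Hi Hu Hv Hca S2).
  - destruct Hy as [ct [cu [_ [_ Hy]]]]. destruct C as [y0 [y0' [C _]]]. tagc.
  - destruct Hy as [ct [cu [_ [_ Hy]]]]. destruct C as [y0 [z0 [y0' [z0' [C _]]]]]. tagc.
  - destruct Hy as [ct [cu [_ [_ Hy]]]]. destruct C as [y0 [C _]]. tagc.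
  - destruct Hy as [ct [cu [_ [_ Hy]]]]. destruct C as [u0 [y0 [y0' [C _]]]]. tagc.
  - destruct Hy as [y1 [_ Hy]]. destruct C as [t [u [t' [u' [_ [_ [[C D]|[C D]]]]]]]]; tagc.
  - destruct Hy as [y1 [Hy1 Hy]]. destruct C as [y0 [y0' [C [D F]]]].
    rewrite <- (neg_dec Hy C) in F. exists y0'. split; auto. exact (IHg _ _ _ _ _ Hi Hy1 Hh F).
  - destruct Hy as [y1 [_ Hy]]. destruct C as [y0 [z0 [y0' [z0' [C _]]]]]. tagc.
  - destruct Hy as [y1 [_ Hy]]. destruct C as [y0 [C _]]. tagc.
  - destruct Hy as [y1 [_ Hy]]. destruct C as [u0 [y0 [y0' [C _]]]]. tagc.
  - destruct Hy as [y1 [z1 [_ [_ Hy]]]]. destruct C as [t [u [t' [u' [_ [_ [[C D]|[C D]]]]]]]]; tagc.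
  - destruct Hy as [y1 [z1 [_ [_ Hy]]]]. destruct C as [y0 [y0' [C _]]]. tagc.
  - destruct Hy as [y1 [z1 [Hy1 [Hz1 Hy]]]]. destruct C as [y0 [z0 [y0' [z0' [C [D [F G]]]]]]].
    destruct (or_dec Hy C). subst. exists y0', z0'. repeat split; auto.
    + exact (IHg1 _ _ _ _ _ Hi Hy1 Hh F).
    + exact (IHg2 _ _ _ _ _ Hi Hz1 Hh G).
  - destruct Hy as [y1 [z1 [_ [_ Hy]]]]. destruct C as [y0 [C _]]. tagc.
  - destruct Hy as [y1 [z1 [_ [_ Hy]]]]. destruct C as [u0 [y0 [y0' [C _]]]]. tagc.
  - destruct Hy as [w [y1 [_ [_ Hy]]]]. destruct C as [t [u [t' [u' [_ [_ [[C D]|[C D]]]]]]]]; tagc.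
  - destruct Hy as [w [y1 [_ [_ Hy]]]]. destruct C as [y0 [y0' [C _]]]. tagc.
  - destruct Hy as [w [y1 [_ [_ Hy]]]]. destruct C as [y0 [z0 [y0' [z0' [C _]]]]]. tagc.
  - destruct Hy as [w [y1 [Hw [Hy1 Hy]]]]. destruct C as [y0 [C D]].
    destruct (ex_dec Hy C) as [e1 e2]. subst w y0 y'.
    assert (k = i) by exact (var_inj Hw Hv). subst.
    exists v, y1. split; [exact Hw|split; [|exact Hy]].
    replace (inst (upd s i a) (i :: remove Nat.eq_dec i b) g) with (inst s (i :: b) g); auto.
    apply inst_ext.
    + intro j. simpl. rewrite In_remove_iff. destruct (Nat.eq_dec i j); intuition.
    + intros j Hj. rewrite upd_neq; auto. intro; subst; apply Hj; simpl; auto.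
  - destruct Hy as [w [y1 [Hw [Hy1 Hy]]]]. destruct C as [u0 [y0 [y0' [C [D [F G]]]]]].
    destruct (ex_dec Hy C) as [e1 e2]. subst u0 y0.
    assert (k <> i). { intro; subst. apply D. exact (ctm_uniq Hw Hv). }
    exists w, y0'. split; [exact Hw|split; [|exact F]].
    replace (k :: remove Nat.eq_dec i b) with (remove Nat.eq_dec i (k :: b)).
    + apply (IHg s (k::b) _ _ _ (or_intror Hi) Hy1 Hh G).
    + simpl. destruct (Nat.eq_dec i k); [congruence|auto].
Qed.

Lemma sw_build h1 h2 w h : subst_witness E v ca h1 -> subst_witness E v ca h2 ->
  (forall z, E z h <-> E z h1 \/ E z h2 \/ z = w) -> SWC v ca h w -> subst_witness E v ca h.
Proof.
  intros H1 H2 Hh Hw z Hz. apply Hh in Hz. destruct Hz as [Hz|[Hz|Hz]].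
  - apply (SWC_mono (h:=h1)). intros u Hu; apply Hh; auto. exact (H1 z Hz).
  - apply (SWC_mono (h:=h2)). intros u Hu; apply Hh; auto. exact (H2 z Hz).
  - subst; auto.
Qed.

Lemma sw_new h1 h2 x x' : subst_witness E v ca h1 -> subst_witness E v ca h2 ->
  (forall h w, (forall z, E z h <-> E z h1 \/ E z h2 \/ z = w) -> is_pair E x x' w -> SWC v ca h w) ->
  exists h, subst_witness E v ca h /\ pair_in E h x x'.
Proof.
  intros H1 H2 HC. destruct (pair_ex x x') as [w Hw]. destruct (set3 h1 h2 w) as [h Hh].
  exists h. split.
  - apply (sw_build H1 H2 Hh). apply HC; auto.
  - exists w. split; auto. apply Hh; auto.
Qed.

Lemma sw_empty e : is_empty E e -> subst_witness E v ca e.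
Proof. intros He w Hw. destruct (He w Hw). Qed.

Lemma st_ex t : exists t', subst_term v ca t t'.
Proof.
  destruct (classic (t = v)) as [e|e].
  - exists ca. left; auto.
  - exists t. right; auto.
Qed.

Lemma subst_complete g : forall (s : nat -> M) b y, In i b -> code_cfm E (inst s b g) y ->
  exists h y', subst_witness E v ca h /\ pair_in E h y y'.
Proof.
  destruct Hempty as [e He].
  induction g as [j k|j k|g IHg|g1 IHg1 g2 IHg2|k g IHg]; cbn [inst code_cfm];
    intros s b y Hi Hy.
  - destruct Hy as [ct [cu [Ht [Hu Hy]]]].
    destruct (st_ex ct) as [t' St]. destruct (st_ex cu) as [u' Su].
    destruct (pair_ex t' u') as [q Hq]. destruct (tagged_ex 0 q) as [y' Hy'].
    destruct (sw_new (x:=y) (x':=y') (sw_empty He) (sw_empty He)) as [h [A B]]; eauto.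
    intros h w _ Hw. exists y, y'. split; auto. left. exists ct, cu, t', u'.
    repeat split; auto. left. split; auto. exists q; auto.
  - destruct Hy as [ct [cu [Ht [Hu Hy]]]].
    destruct (st_ex ct) as [t' St]. destruct (st_ex cu) as [u' Su].
    destruct (pair_ex t' u') as [q Hq]. destruct (tagged_ex 1 q) as [y' Hy'].
    destruct (sw_new (x:=y) (x':=y') (sw_empty He) (sw_empty He)) as [h [A B]]; eauto.
    intros h w _ Hw. exists y, y'. split; auto. left. exists ct, cu, t', u'.
    repeat split; auto. right. split; auto. exists q; auto.
  - destruct Hy as [y1 [Hy1 Hy]].
    destruct (IHg _ _ _ Hi Hy1) as [h1 [y1' [H1 P1]]].
    destruct (tagged_ex 2 y1') as [y' Hy'].
    destruct (sw_new (x:=y) (x':=y') H1 H1) as [h [A B]]; eauto.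
    intros h w Hh Hw. exists y, y'. split; auto. right; left. exists y1, y1'.
    repeat split; auto. eapply pair_in_mono; [|exact P1]. intros u Hu; apply Hh; auto.
  - destruct Hy as [y1 [z1 [Hy1 [Hz1 Hy]]]].
    destruct (IHg1 _ _ _ Hi Hy1) as [h1 [y1' [H1 P1]]].
    destruct (IHg2 _ _ _ Hi Hz1) as [h2 [z1' [H2 P2]]].
    destruct (pair_ex y1' z1') as [q Hq]. destruct (tagged_ex 3 q) as [y' Hy'].
    destruct (sw_new (x:=y) (x':=y') H1 H2) as [h [A B]]; eauto.
    intros h w Hh Hw. exists y, y'. split; auto. right; right; left. exists y1, z1, y1', z1'.
    repeat split; auto.
    + exists q; auto.
    + eapply pair_in_mono; [|exact P1]. intros u Hu; apply Hh; auto.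
    + eapply pair_in_mono; [|exact P2]. intros u Hu; apply Hh; auto.
  - destruct Hy as [w0 [y1 [Hw0 [Hy1 Hy]]]].
    destruct (Nat.eq_dec k i) as [ki|ki].
    + subst. rewrite (ctm_uniq Hw0 Hv) in Hy.
      destruct (sw_new (x:=y) (x':=y) (sw_empty He) (sw_empty He)) as [h [A B]]; eauto.
      intros h w _ Hw. exists y, y. split; auto. right; right; right; left. eauto.
    + destruct (IHg s (k::b) _ (or_intror Hi) Hy1) as [h1 [y1' [H1 P1]]].
      destruct (pair_ex w0 y1') as [q Hq]. destruct (tagged_ex 4 q) as [y' Hy'].
      destruct (sw_new (x:=y) (x':=y') H1 H1) as [h [A B]]; eauto.
      intros h w Hh Hw. exists y, y'. split; auto. right; right; right; right.
      exists w0, y1, y1'. repeat split; auto.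
      * intro ee. subst. apply ki. exact (var_inj Hw0 Hv).
      * exists q; auto.
      * eapply pair_in_mono; [|exact P1]. intros u Hu; apply Hh; auto.
Qed.

End Subst.

Lemma subst_iff i a v ca g (s : nat -> M) y : code_ctm E (cVar i) v -> const_code E a ca ->
  code_cfm E (inst s [i] g) y ->
  forall y', subst E v ca y y' <-> code_cfm E (inst (upd s i a) nil g) y'.
Proof.
  intros Hv Hca Hy y'.
  assert (Hr : remove Nat.eq_dec i [i] = nil).
  { simpl. destruct (Nat.eq_dec i i); congruence. }
  split.
  - intros [h [Hh P]]. rewrite <- Hr. exact (subst_sound Hv Hca g s [i] (or_introl eq_refl) Hy Hh P).
  - intro Hy'. destruct (subst_complete ca Hv g s [i] y (or_introl eq_refl) Hy) as [h [y'' [Hh P]]].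
    assert (Hy'' := subst_sound Hv Hca g s [i] (or_introl eq_refl) Hy Hh P). rewrite Hr in Hy''.
    rewrite (cfm_uniq Hy'' Hy') in P. exists h; auto.
Qed.

Arguments subst_iff {i a v ca g s y}.

Lemma agree T p : depth_truth_class E T p -> forall phi (s : nat -> M) x,
  code_cfm E (inst s nil phi) x -> form_depth_le E x p -> (T x <-> sat E s phi).
Proof.
  intros [HT1 HT2] phi. induction phi as [i j|i j|g IHg|g1 IHg1 g2 IHg2|k g IHg];
    intros s x Hx Hxp;
    destruct (HT2 x (code_sentence Hx) Hxp) as [Hat [Hneg [Hor Hex]]];
    cbn [inst code_cfm sat] in *.
  - unfold inst_tm in Hx. simpl in Hx. destruct Hx as [ct [cu [Ht [Hu Hx]]]].
    exact (proj1 (Hat _ _ _ _ Ht Hu) Hx).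
  - unfold inst_tm in Hx. simpl in Hx. destruct Hx as [ct [cu [Ht [Hu Hx]]]].
    exact (proj2 (Hat _ _ _ _ Ht Hu) Hx).
  - destruct Hx as [y [Hy Hx]]. rewrite (Hneg y Hx). rewrite (IHg s y Hy (fdl_neg Hxp Hx)).
    tauto.
  - destruct Hx as [y [z [Hy [Hz Hx]]]]. destruct (fdl_or Hxp Hx) as [Py Pz].
    rewrite (Hor y z Hx), (IHg1 s y Hy Py), (IHg2 s z Hz Pz). tauto.
  - destruct Hx as [v [y [Hv [Hy Hx]]]]. rewrite (Hex v y Hx).
    assert (Py := fdl_ex Hxp Hx).
    split.
    + intros [a [ca [y' [Hca [Hs HTy]]]]]. exists a.
      apply (subst_iff Hv Hca Hy) in Hs.
      assert (Py' := shape_fdl (inst_shape g s (upd s k a) [k] nil) Hy Hs Py).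
      exact (proj1 (IHg _ _ Hs Py') HTy).
    + intros [a Ha]. destruct (tagged_ex 1 a) as [ca Hca].
      destruct (cfm_ex (inst (upd s k a) nil g)) as [y' Hy'].
      exists a, ca, y'. split; [exact Hca|split].
      * apply (subst_iff Hv Hca Hy); exact Hy'.
      * assert (Py' := shape_fdl (inst_shape g s (upd s k a) [k] nil) Hy Hy' Py).
        exact (proj2 (IHg _ _ Hy' Py') Ha).
Qed.

Lemma le_succ k n1 n0 d d' : is_num E (S k) n1 -> is_num E k n0 ->
  (E d n1 \/ d = n1) -> E d' d -> (E d' n0 \/ d' = n0).
Proof.
  intros [y [Hy Hs]] Hn0 Hd Hd'. rewrite (num_uniq Hy Hn0) in Hs.
  destruct Hd as [Hd|Hd].
  - apply Hs in Hd. destruct Hd as [Hd|Hd].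
    + left. exact (num_trans Hn0 _ _ Hd' Hd).
    + subst. left; auto.
  - subst. apply Hs in Hd'. exact Hd'.
Qed.
Arguments le_succ {k n1 n0 d d'}.


Lemma le_zero n0 d d' : is_num E 0 n0 -> (E d n0 \/ d = n0) -> E d' d -> False.
Proof.
  simpl. intros Hn Hd Hd'. destruct Hd as [Hd|Hd]. exact (Hn d Hd). subst. exact (Hn d' Hd').
Qed.
Arguments le_zero {n0 d d'}.


Lemma le_up k nk n1 d : is_num E k nk -> is_num E (S k) n1 -> (E d nk \/ d = nk) -> E d n1.
Proof.
  intros Hk [y [Hy Hs]] Hd. rewrite (num_uniq Hy Hk) in Hs. apply Hs.
  destruct Hd; auto.
Qed.
Arguments le_up {k nk n1 d}.


Lemma fdl_sub k n1 n0 h d y d' : is_num E (S k) n1 -> is_num E k n0 -> depth_witness E h ->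
  (E d n1 \/ d = n1) -> E d' d -> pair_in E h y d' -> form_depth_le E y n0.
Proof.
  intros H1 H0 Hh Hd Hd' Hy. split. exact (num_nat H0).
  exists h, d'. repeat split; auto. exact (le_succ H1 H0 Hd Hd').
Qed.
Arguments fdl_sub {k n1 n0 h d y d'}.


Lemma num_pred k n1 : is_num E (S k) n1 -> exists n0, is_num E k n0.
Proof. intros [y [Hy _]]. eauto. Qed.
Arguments num_pred {k n1}.


Lemma fdlz_neg n0 x y : is_num E 0 n0 -> form_depth_le E x n0 -> neg_code E y x -> False.
Proof.
  intros H0 [_ [h [d [Hh [Hx Hd]]]]] Hn. destruct (dw_neg Hh Hx Hn) as [d' [A _]].
  exact (le_zero H0 Hd A).
Qed.
Arguments fdlz_neg {n0 x y}.

Lemma fdlz_or n0 x y z : is_num E 0 n0 -> form_depth_le E x n0 -> or_code E y z x -> False.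
Proof.
  intros H0 [_ [h [d [Hh [Hx Hd]]]]] Hn. destruct (dw_or Hh Hx Hn) as [d1 [d2 [A _]]].
  exact (le_zero H0 Hd A).
Qed.
Arguments fdlz_or {n0 x y z}.

Lemma fdlz_ex n0 x v y : is_num E 0 n0 -> form_depth_le E x n0 -> ex_code E v y x -> False.
Proof.
  intros H0 [_ [h [d [Hh [Hx Hd]]]]] Hn. destruct (dw_ex Hh Hx Hn) as [d' [_ [A _]]].
  exact (le_zero H0 Hd A).
Qed.
Arguments fdlz_ex {n0 x v y}.


Lemma fdls_neg k n1 n0 x y : is_num E (S k) n1 -> is_num E k n0 -> form_depth_le E x n1 ->
  neg_code E y x -> form_depth_le E y n0.
Proof.
  intros H1 H0 [_ [h [d [Hh [Hx Hd]]]]] Hn. destruct (dw_neg Hh Hx Hn) as [d' [A B]].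
  exact (fdl_sub H1 H0 Hh Hd A B).
Qed.
Arguments fdls_neg {k n1 n0 x y}.

Lemma fdls_or k n1 n0 x y z : is_num E (S k) n1 -> is_num E k n0 -> form_depth_le E x n1 ->
  or_code E y z x -> form_depth_le E y n0 /\ form_depth_le E z n0.
Proof.
  intros H1 H0 [_ [h [d [Hh [Hx Hd]]]]] Hn. destruct (dw_or Hh Hx Hn) as [d1 [d2 [A [B [C D]]]]].
  split. exact (fdl_sub H1 H0 Hh Hd A C). exact (fdl_sub H1 H0 Hh Hd B D).
Qed.
Arguments fdls_or {k n1 n0 x y z}.

Lemma fdls_ex k n1 n0 x v y : is_num E (S k) n1 -> is_num E k n0 -> form_depth_le E x n1 ->
  ex_code E v y x -> var_code E v /\ form_depth_le E y n0.
Proof.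
  intros H1 H0 [_ [h [d [Hh [Hx Hd]]]]] Hn. destruct (dw_ex Hh Hx Hn) as [d' [V [A B]]].
  split; auto. exact (fdl_sub H1 H0 Hh Hd A B).
Qed.
Arguments fdls_ex {k n1 n0 x v y}.


Lemma fdl_mk_neg k n0 n1 x y : is_num E k n0 -> is_num E (S k) n1 -> form_depth_le E y n0 ->
  neg_code E y x -> form_depth_le E x n1.
Proof.
  intros H0 H1 [_ [h [d [Hh [Hy Hd]]]]] Hn.
  destruct (dw_new (x:=x) (d:=n1) Hh Hh) as [h' [A [B _]]].
  - intros h0 w Hh0 Hw. exists x, n1. split; auto. split. exact (num_nat H1).
    right; left. exists y, d. repeat split; auto. exact (le_up H0 H1 Hd).
    eapply pair_in_mono; [|exact Hy]. intros u Hu; apply Hh0; auto.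
  - split. exact (num_nat H1). exists h', n1. auto.
Qed.
Arguments fdl_mk_neg {k n0 n1 x y}.


Lemma fdl_mk_or k n0 n1 x y z : is_num E k n0 -> is_num E (S k) n1 -> form_depth_le E y n0 ->
  form_depth_le E z n0 -> or_code E y z x -> form_depth_le E x n1.
Proof.
  intros H0 H1 [_ [h [d [Hh [Hy Hd]]]]] [_ [h2 [d2 [Hh2 [Hz Hd2]]]]] Hn.
  destruct (dw_new (x:=x) (d:=n1) Hh Hh2) as [h' [A [B _]]].
  - intros h0 w Hh0 Hw. exists x, n1. split; auto. split. exact (num_nat H1).
    right; right; left. exists y, z, d, d2. repeat split; auto.
    + exact (le_up H0 H1 Hd).
    + exact (le_up H0 H1 Hd2).
    + eapply pair_in_mono; [|exact Hy]. intros u Hu; apply Hh0; auto.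
    + eapply pair_in_mono; [|exact Hz]. intros u Hu; apply Hh0; auto.
  - split. exact (num_nat H1). exists h', n1. auto.
Qed.
Arguments fdl_mk_or {k n0 n1 x y z}.


Lemma fdl_mk_ex k n0 n1 x v y : is_num E k n0 -> is_num E (S k) n1 -> var_code E v ->
  form_depth_le E y n0 -> ex_code E v y x -> form_depth_le E x n1.
Proof.
  intros H0 H1 Hv [_ [h [d [Hh [Hy Hd]]]]] Hn.
  destruct (dw_new (x:=x) (d:=n1) Hh Hh) as [h' [A [B _]]].
  - intros h0 w Hh0 Hw. exists x, n1. split; auto. split. exact (num_nat H1).
    right; right; right. exists v, y, d. repeat split; auto. exact (le_up H0 H1 Hd).
    eapply pair_in_mono; [|exact Hy]. intros u Hu; apply Hh0; auto.
  - split. exact (num_nat H1). exists h', n1. auto.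
Qed.
Arguments fdl_mk_ex {k n0 n1 x v y}.


Lemma fdl_atom k nk x : is_num E k nk -> atom_code E x -> form_depth_le E x nk.
Proof.
  intros Hk Ha. destruct (num_ex 0) as [z Hz].
  destruct (dw_atom Ha (num_nat (k:=0) Hz)) as [h [A B]].
  split. exact (num_nat Hk). exists h, z. repeat split; auto.
  destruct k.
  - right. exact (num_uniq Hz Hk).
  - left. refine (num_mem_rev _ Hz Hk). lia.
Qed.
Arguments fdl_atom {k nk x}.


Lemma fdl_terms_eq x p t u : form_depth_le E x p -> eq_code E t u x -> term_code E t /\ term_code E u.
Proof.
  intros [_ [h [d [Hh [Hx _]]]]] He. destruct (dw_at Hh Hx) as [_ [C|[C|[C|C]]]].
  - destruct C as [t0 [u0 [T0 [U0 [C|C]]]]]; [|tagc].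
    destruct (eq_dec' He C). subst. auto.
  - destruct C as [y0 [d' [A _]]]; tagc.
  - destruct C as [y0 [z0 [d1 [d2 [A _]]]]]; tagc.
  - destruct C as [v0 [y0 [d' [_ [A _]]]]]; tagc.
Qed.
Arguments fdl_terms_eq {x p t u}.

Lemma fdl_terms_mem x p t u : form_depth_le E x p -> mem_code E t u x -> term_code E t /\ term_code E u.
Proof.
  intros [_ [h [d [Hh [Hx _]]]]] He. destruct (dw_at Hh Hx) as [_ [C|[C|[C|C]]]].
  - destruct C as [t0 [u0 [T0 [U0 [C|C]]]]]; [tagc|].
    destruct (mem_dec He C). subst. auto.
  - destruct C as [y0 [d' [A _]]]; tagc.
  - destruct C as [y0 [z0 [d1 [d2 [A _]]]]]; tagc.
  - destruct C as [v0 [y0 [d' [_ [A _]]]]]; tagc.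
Qed.
Arguments fdl_terms_mem {x p t u}.


Lemma st_term v c a t t' : const_code E a c -> term_code E t -> subst_term v c t t' -> term_code E t'.
Proof. intros Hc Ht [[_ e]|[_ e]]; subst; auto. right; eauto. Qed.
Arguments st_term {v c a t t'}.


Lemma subst_fdl k : forall nk y y' v c a, is_num E k nk -> form_depth_le E y nk ->
  const_code E a c -> subst E v c y y' -> form_depth_le E y' nk.
Proof.
  induction k; intros nk y y' v c a Hk Hy Hc [hs [Hhs P]];
    destruct (sw_at Hhs P) as [C|[C|[C|[C|C]]]].
  - destruct C as [t [u [t' [u' [S1 [S2 [[C D]|[C D]]]]]]]].
    + destruct (fdl_terms_eq Hy C) as [Tt Tu]. apply (fdl_atom Hk). exists t', u'.
      split; [exact (st_term Hc Tt S1)|split; [exact (st_term Hc Tu S2)|left; exact D]].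
    + destruct (fdl_terms_mem Hy C) as [Tt Tu]. apply (fdl_atom Hk). exists t', u'.
      split; [exact (st_term Hc Tt S1)|split; [exact (st_term Hc Tu S2)|right; exact D]].
  - destruct C as [z [z' [C _]]]. destruct (fdlz_neg Hk Hy C).
  - destruct C as [y0 [z0 [y0' [z0' [C _]]]]]. destruct (fdlz_or Hk Hy C).
  - destruct C as [z [_ e]]. subst; auto.
  - destruct C as [u [z [z' [C _]]]]. destruct (fdlz_ex Hk Hy C).
  - destruct C as [t [u [t' [u' [S1 [S2 [[C D]|[C D]]]]]]]].
    + destruct (fdl_terms_eq Hy C) as [Tt Tu]. apply (fdl_atom Hk). exists t', u'.
      split; [exact (st_term Hc Tt S1)|split; [exact (st_term Hc Tu S2)|left; exact D]].
    + destruct (fdl_terms_mem Hy C) as [Tt Tu]. apply (fdl_atom Hk). exists t', u'.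
      split; [exact (st_term Hc Tt S1)|split; [exact (st_term Hc Tu S2)|right; exact D]].
  - destruct C as [z [z' [C [D F]]]]. destruct (num_pred Hk) as [n0 H0].
    assert (Hz := fdls_neg Hk H0 Hy C).
    assert (Hz' := IHk _ _ _ _ _ _ H0 Hz Hc (ex_intro _ hs (conj Hhs F))).
    exact (fdl_mk_neg H0 Hk Hz' D).
  - destruct C as [y0 [z0 [y0' [z0' [C [D [F G]]]]]]]. destruct (num_pred Hk) as [n0 H0].
    destruct (fdls_or Hk H0 Hy C) as [Hy0 Hz0].
    assert (A1 := IHk _ _ _ _ _ _ H0 Hy0 Hc (ex_intro _ hs (conj Hhs F))).
    assert (A2 := IHk _ _ _ _ _ _ H0 Hz0 Hc (ex_intro _ hs (conj Hhs G))).
    exact (fdl_mk_or H0 Hk A1 A2 D).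
  - destruct C as [z [_ e]]. subst; auto.
  - destruct C as [u [z [z' [C [D [F G]]]]]]. destruct (num_pred Hk) as [n0 H0].
    destruct (fdls_ex Hk H0 Hy C) as [Hu Hz].
    assert (A1 := IHk _ _ _ _ _ _ H0 Hz Hc (ex_intro _ hs (conj Hhs G))).
    exact (fdl_mk_ex H0 Hk Hu A1 F).
Qed.
Arguments subst_fdl {k nk y y' v c a}.


Definition AtomTrue x := exists a b ca cb, const_code E a ca /\ const_code E b cb /\
  ((eq_code E ca cb x /\ a = b) \/ (mem_code E ca cb x /\ E a b)).
Definition Body (A : M -> Prop) x := AtomTrue x \/ (exists y, neg_code E y x /\ ~ A y) \/
  (exists y z, or_code E y z x /\ (A y \/ A z)) \/
  (exists v y, ex_code E v y x /\ exists a ca y', const_code E a ca /\ subst E v ca y y' /\ A y').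
Definition Tcl (np : M) (A : M -> Prop) x := (is_sentence E x /\ form_depth_le E x np) /\ Body A x.

Lemma body_eq A a b ca cb x : const_code E a ca -> const_code E b cb -> eq_code E ca cb x ->
  (Body A x <-> a = b).
Proof.
  intros Ha Hb Hx. split.
  - intros [C|[C|[C|C]]].
    + destruct C as [a' [b' [ca' [cb' [Ha' [Hb' [[C D]|[C D]]]]]]]]; [|tagc].
      destruct (eq_dec' Hx C). subst. rewrite (const_dec Ha Ha'), (const_dec Hb Hb'). auto.
    + destruct C as [y [C _]]; tagc.
    + destruct C as [y [z [C _]]]; tagc.
    + destruct C as [v [y [C _]]]; tagc.
  - intro e. left. exists a, b, ca, cb. auto.
Qed.
Lemma body_mem A a b ca cb x : const_code E a ca -> const_code E b cb -> mem_code E ca cb x ->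
  (Body A x <-> E a b).
Proof.
  intros Ha Hb Hx. split.
  - intros [C|[C|[C|C]]].
    + destruct C as [a' [b' [ca' [cb' [Ha' [Hb' [[C D]|[C D]]]]]]]]; [tagc|].
      destruct (mem_dec Hx C). subst. rewrite (const_dec Ha Ha'), (const_dec Hb Hb'). auto.
    + destruct C as [y [C _]]; tagc.
    + destruct C as [y [z [C _]]]; tagc.
    + destruct C as [v [y [C _]]]; tagc.
  - intro e. left. exists a, b, ca, cb. auto.
Qed.
Lemma body_neg A y x : neg_code E y x -> (Body A x <-> ~ A y).
Proof.
  intros Hx. split.
  - intros [C|[C|[C|C]]].
    + destruct C as [a' [b' [ca' [cb' [Ha' [Hb' [[C D]|[C D]]]]]]]]; tagc.
    + destruct C as [y0 [C D]]. rewrite (neg_dec Hx C). auto.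
    + destruct C as [y0 [z [C _]]]; tagc.
    + destruct C as [v [y0 [C _]]]; tagc.
  - intro e. right; left. eauto.
Qed.
Lemma body_or A y z x : or_code E y z x -> (Body A x <-> A y \/ A z).
Proof.
  intros Hx. split.
  - intros [C|[C|[C|C]]].
    + destruct C as [a' [b' [ca' [cb' [Ha' [Hb' [[C D]|[C D]]]]]]]]; tagc.
    + destruct C as [y0 [C D]]; tagc.
    + destruct C as [y0 [z0 [C D]]]. destruct (or_dec Hx C). subst. auto.
    + destruct C as [v [y0 [C _]]]; tagc.
  - intro e. right; right; left. eauto.
Qed.
Lemma body_ex A v y x : ex_code E v y x ->
  (Body A x <-> exists a ca y', const_code E a ca /\ subst E v ca y y' /\ A y').
Proof.
  intros Hx. split.
  - intros [C|[C|[C|C]]].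
    + destruct C as [a' [b' [ca' [cb' [Ha' [Hb' [[C D]|[C D]]]]]]]]; tagc.
    + destruct C as [y0 [C D]]; tagc.
    + destruct C as [y0 [z0 [C D]]]; tagc.
    + destruct C as [v0 [y0 [C D]]]. destruct (ex_dec Hx C). subst. auto.
  - intro e. right; right; right. eauto.
Qed.

Lemma body_ext A B x : (forall y, neg_code E y x -> (A y <-> B y)) ->
  (forall y z, or_code E y z x -> (A y <-> B y) /\ (A z <-> B z)) ->
  (forall v y a ca y', ex_code E v y x -> const_code E a ca -> subst E v ca y y' -> (A y' <-> B y')) ->
  (Body A x <-> Body B x).
Proof.
  intros H1 H2 H3. unfold Body. split; intros [C|[C|[C|C]]]; auto.
  - right; left. destruct C as [y [C D]]. exists y. rewrite <- H1; auto.
  - right; right; left. destruct C as [y [z [C D]]]. exists y, z. destruct (H2 _ _ C).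
    split; auto; tauto.
  - right; right; right. destruct C as [v [y [C [a [ca [y' [D [F G]]]]]]]].
    exists v, y. split; auto. exists a, ca, y'. repeat split; auto. rewrite <- (H3 _ _ _ _ _ C D F); auto.
  - right; left. destruct C as [y [C D]]. exists y. rewrite H1; auto.
  - right; right; left. destruct C as [y [z [C D]]]. exists y, z. destruct (H2 _ _ C).
    split; auto; tauto.
  - right; right; right. destruct C as [v [y [C [a [ca [y' [D [F G]]]]]]]].
    exists v, y. split; auto. exists a, ca, y'. repeat split; auto. rewrite (H3 _ _ _ _ _ C D F); auto.
Qed.

Section Iter.
Variable np : M.
Variable Cl : (M -> Prop) -> (M -> Prop).
Hypothesis Cl_spec : forall A x, Cl A x <-> Tcl np A x.
Variable A0 : M -> Prop.

Fixpoint Tit (k : nat) : M -> Prop :=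
  match k with
  | 0 => Cl A0
  | S k => Cl (Tit k)
  end.

Lemma tit_agree k : forall nk x, is_num E k nk -> form_depth_le E x nk -> (Tit k x <-> Tit (S k) x).
Proof.
  induction k; intros nk x Hk Hx; simpl; rewrite !Cl_spec; unfold Tcl;
    apply and_iff_compat_l; apply body_ext.
  - intros y C. destruct (fdlz_neg Hk Hx C).
  - intros y z C. destruct (fdlz_or Hk Hx C).
  - intros v y a ca y' C. destruct (fdlz_ex Hk Hx C).
  - intros y C. destruct (num_pred Hk) as [n0 H0]. exact (IHk _ _ H0 (fdls_neg Hk H0 Hx C)).
  - intros y z C. destruct (num_pred Hk) as [n0 H0]. destruct (fdls_or Hk H0 Hx C).
    split; [exact (IHk _ _ H0 H)|exact (IHk _ _ H0 H1)].
  - intros v y a ca y' C D F. destruct (num_pred Hk) as [n0 H0]. destruct (fdls_ex Hk H0 Hx C).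
    exact (IHk _ _ H0 (subst_fdl H0 H1 D F)).
Qed.

Lemma tit_dtc p : is_num E p np -> depth_truth_class E (Tit p) np.
Proof.
  intro Hp. split.
  - intros x Hx. destruct p; simpl in Hx; apply Cl_spec in Hx; exact (proj1 Hx).
  - intros x Hs Hx.
    set (prev := match p with 0 => A0 | S k => Tit k end).
    assert (HT : forall y, Tit p y <-> Tcl np prev y).
    { intro y. destruct p; simpl; apply Cl_spec. }
    assert (HB : Tit p x <-> Body prev x).
    { rewrite HT. unfold Tcl. tauto. }
    assert (Hagr : forall y k nk, p = S k -> is_num E k nk -> form_depth_le E y nk ->
              (prev y <-> Tit p y)).
    { intros y k nk e Hk Hy. subst p. simpl prev. exact (tit_agree k Hk Hy). }
    split; [|split; [|split]].
    + intros a b ca cb Ha Hb. rewrite HB. split; intro C.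
      * exact (body_eq _ Ha Hb C).
      * exact (body_mem _ Ha Hb C).
    + intros y C. rewrite HB, (body_neg _ C). destruct p.
      * destruct (fdlz_neg Hp Hx C).
      * destruct (num_pred Hp) as [n0 H0]. rewrite (Hagr y p n0 eq_refl H0 (fdls_neg Hp H0 Hx C)).
        tauto.
    + intros y z C. rewrite HB, (body_or _ C). destruct p.
      * destruct (fdlz_or Hp Hx C).
      * destruct (num_pred Hp) as [n0 H0]. destruct (fdls_or Hp H0 Hx C) as [Hy Hz].
        rewrite (Hagr y p n0 eq_refl H0 Hy), (Hagr z p n0 eq_refl H0 Hz). tauto.
    + intros v y C. rewrite HB, (body_ex _ C). destruct p.
      * destruct (fdlz_ex Hp Hx C).
      * destruct (num_pred Hp) as [n0 H0]. destruct (fdls_ex Hp H0 Hx C) as [Hv Hy].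
        split; intros [a [ca [y' [D [F G]]]]]; exists a, ca, y'; repeat split; auto.
        -- rewrite <- (Hagr y' p n0 eq_refl H0 (subst_fdl H0 Hy D F)); auto.
        -- rewrite (Hagr y' p n0 eq_refl H0 (subst_fdl H0 Hy D F)); auto.
Qed.

End Iter.
End Internal.

Section DB.
Context {M : Type} (E : M -> M -> Prop).

Inductive db : Type :=
| dEq : nat -> nat -> db
| dIn : nat -> nat -> db
| dInC : nat -> nat -> db
| dNot : db -> db
| dOr : db -> db -> db
| dAnd : db -> db -> db
| dImp : db -> db -> db
| dIff : db -> db -> db
| dEx : db -> db
| dAll : db -> db.

Definition scons (a : M) (env : nat -> M) : nat -> M :=
  fun i => match i with 0 => a | S i => env i end.

Fixpoint satD (env : nat -> M) (c : nat -> M -> Prop) (f : db) : Prop :=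
  match f with
  | dEq i j => env i = env j
  | dIn i j => E (env i) (env j)
  | dInC i k => c k (env i)
  | dNot f => ~ satD env c f
  | dOr f g => satD env c f \/ satD env c g
  | dAnd f g => satD env c f /\ satD env c g
  | dImp f g => satD env c f -> satD env c g
  | dIff f g => satD env c f <-> satD env c g
  | dEx f => exists a, satD (scons a env) c f
  | dAll f => forall a, satD (scons a env) c f
  end.

Fixpoint wf (n : nat) (f : db) : bool :=
  match f with
  | dEq i j | dIn i j => Nat.ltb i n && Nat.ltb j n
  | dInC i _ => Nat.ltb i n
  | dNot f => wf n f
  | dOr f g | dAnd f g | dImp f g | dIff f g => wf n f && wf n g
  | dEx f | dAll f => wf (S n) f
  end.

Fixpoint tr (n : nat) (f : db) : fm2 :=
  match f with
  | dEq i j => gEq (n - S i) (n - S j)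
  | dIn i j => gIn (n - S i) (n - S j)
  | dInC i k => gInC (n - S i) k
  | dNot f => gNot (tr n f)
  | dOr f g => gOr (tr n f) (tr n g)
  | dAnd f g => gNot (gOr (gNot (tr n f)) (gNot (tr n g)))
  | dImp f g => gOr (gNot (tr n f)) (tr n g)
  | dIff f g => gNot (gOr (gNot (gOr (gNot (tr n f)) (tr n g))) (gNot (gOr (gNot (tr n g)) (tr n f))))
  | dEx f => gEx n (tr (S n) f)
  | dAll f => gNot (gEx n (gNot (tr (S n) f)))
  end.

Lemma tr_ok f : forall n s env c, wf n f = true -> (forall i, i < n -> env i = s (n - S i)) ->
  (sat2 E s c (tr n f) <-> satD env c f).
Proof.
  induction f as [i j|i j|i k|f IHf|f1 IHf1 f2 IHf2|f1 IHf1 f2 IHf2|f1 IHf1 f2 IHf2|f1 IHf1 f2 IHf2|f IHf|f IHf];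
    simpl; intros n s env c Hwf Hs;
    repeat match goal with H : (_ && _)%bool = true |- _ => apply andb_prop in H; destruct H end.
  - apply Nat.ltb_lt in H. apply Nat.ltb_lt in H0. rewrite (Hs i H), (Hs j H0). tauto.
  - apply Nat.ltb_lt in H. apply Nat.ltb_lt in H0. rewrite (Hs i H), (Hs j H0). tauto.
  - apply Nat.ltb_lt in Hwf. rewrite (Hs i Hwf). tauto.
  - rewrite (IHf n s env c Hwf Hs). tauto.
  - rewrite (IHf1 n s env c H Hs), (IHf2 n s env c H0 Hs). tauto.
  - rewrite (IHf1 n s env c H Hs), (IHf2 n s env c H0 Hs).
    destruct (classic (satD env c f1)); destruct (classic (satD env c f2)); tauto.
  - rewrite (IHf1 n s env c H Hs), (IHf2 n s env c H0 Hs).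
    destruct (classic (satD env c f1)); destruct (classic (satD env c f2)); tauto.
  - rewrite (IHf1 n s env c H Hs), (IHf2 n s env c H0 Hs).
    destruct (classic (satD env c f1)); destruct (classic (satD env c f2)); tauto.
  - assert (K : forall a, sat2 E (upd s n a) c (tr (S n) f) <-> satD (scons a env) c f).
    { intro a. apply IHf; auto. intros i Hi. destruct i; simpl.
      - replace (n - 0) with n by lia. unfold upd. rewrite Nat.eqb_refl. auto.
      - rewrite upd_neq by lia. apply Hs. lia. }
    split; intros [a Ha]; exists a; apply K; auto.
  - assert (K : forall a, sat2 E (upd s n a) c (tr (S n) f) <-> satD (scons a env) c f).
    { intro a. apply IHf; auto. intros i Hi. destruct i; simpl.
      - replace (n - 0) with n by lia. unfold upd. rewrite Nat.eqb_refl. auto.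
      - rewrite upd_neq by lia. apply Hs. lia. }
    split.
    + intros H a. apply K. apply NNPP. intro Hn. apply H. exists a. exact Hn.
    + intros H [a Ha]. apply Ha. apply K. auto.
Qed.

End DB.

Section Blocks.
Context {M : Type} (E : M -> M -> Prop).
Notation sat := (satD E).

Definition DEmpty i := dAll (dNot (dIn 0 (S i))).
Definition DUpair i j k := dAll (dIff (dIn 0 (S k)) (dOr (dEq 0 (S i)) (dEq 0 (S j)))).
Definition DPair i j k := dEx (dEx (dAnd (DUpair (2+i) (2+i) 1)
   (dAnd (DUpair (2+i) (2+j) 0) (DUpair 1 0 (2+k))))).
Definition DSucc i j := dAll (dIff (dIn 0 (S j)) (dOr (dIn 0 (S i)) (dEq 0 (S i)))).
Fixpoint DNum k i := match k with
  | 0 => DEmpty i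
  | S k => dEx (dAnd (DNum k 0) (DSucc 0 (S i)))
  end.
Definition DTrans i := dAll (dAll (dImp (dIn 0 1) (dImp (dIn 1 (2+i)) (dIn 0 (2+i))))).
Definition DNat i := dAnd (DTrans i) (dAnd (dAll (dImp (dIn 0 (S i)) (DTrans 0)))
  (dAnd (dOr (DEmpty i) (dEx (DSucc 0 (S i))))
        (dAll (dImp (dIn 0 (S i)) (dOr (DEmpty 0) (dEx (DSucc 0 1))))))).
Definition DTag k i j := dEx (dAnd (DNum k 0) (DPair 0 (S i) (S j))).
Definition DVar i := dEx (dAnd (DNat 0) (DTag 0 0 (S i))).
Definition DConst i j := DTag 1 i j.
Definition DTerm i := dOr (DVar i) (dEx (DConst 0 (S i))).
Definition DEqc t u x := dEx (dAnd (DPair (S t) (S u) 0) (DTag 0 0 (S x))).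
Definition DMemc t u x := dEx (dAnd (DPair (S t) (S u) 0) (DTag 1 0 (S x))).
Definition DNegc y x := DTag 2 y x.
Definition DOrc y z x := dEx (dAnd (DPair (S y) (S z) 0) (DTag 3 0 (S x))).
Definition DExc v y x := dEx (dAnd (DPair (S v) (S y) 0) (DTag 4 0 (S x))).
Definition DAtom x := dEx (dEx (dAnd (DTerm 1) (dAnd (DTerm 0)
   (dOr (DEqc 1 0 (2+x)) (DMemc 1 0 (2+x)))))).
Definition DPairIn h x d := dEx (dAnd (dIn 0 (S h)) (DPair (S x) (S d) 0)).
Definition DWneg x d h := dEx (dEx (dAnd (DNegc 1 (2+x)) (dAnd (dIn 0 (2+d)) (DPairIn (2+h) 1 0)))).
Definition DWor x d h := dEx (dEx (dEx (dEx (dAnd (DOrc 3 2 (4+x)) (dAnd (dIn 1 (4+d))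
  (dAnd (dIn 0 (4+d)) (dAnd (DPairIn (4+h) 3 1) (DPairIn (4+h) 2 0)))))))).
Definition DWex x d h := dEx (dEx (dEx (dAnd (DVar 2) (dAnd (DExc 2 1 (3+x))
  (dAnd (dIn 0 (3+d)) (DPairIn (3+h) 1 0)))))).
Definition DWC' h w := dEx (dEx (dAnd (DPair 1 0 (2+w)) (dAnd (DNat 0)
  (dOr (DAtom 1) (dOr (DWneg 1 0 (2+h)) (dOr (DWor 1 0 (2+h)) (DWex 1 0 (2+h)))))))).
Definition DDW h := dAll (dImp (dIn 0 (S h)) (DWC' (S h) 0)).
Definition DFdl x p := dAnd (DNat p) (dEx (dEx (dAnd (DDW 1) (dAnd (DPairIn 1 (2+x) 0)
   (dOr (dIn 0 (2+p)) (dEq 0 (2+p))))))).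
Definition DFormula x := dEx (DFdl (S x) 0).
Definition DFW1 v x := dEx (dEx (dAnd (dOr (DEqc 1 0 (2+x)) (DMemc 1 0 (2+x)))
   (dOr (dEq 1 (2+v)) (dEq 0 (2+v))))).
Definition DFW2 h x := dEx (dAnd (DNegc 0 (1+x)) (dIn 0 (1+h))).
Definition DFW3 h x := dEx (dEx (dAnd (DOrc 1 0 (2+x)) (dOr (dIn 1 (2+h)) (dIn 0 (2+h))))).
Definition DFW4 v h x := dEx (dEx (dAnd (DExc 1 0 (2+x)) (dAnd (dNot (dEq 1 (2+v))) (dIn 0 (2+h))))).
Definition DFW v h := dAll (dImp (dIn 0 (S h))
  (dOr (DFW1 (S v) 0) (dOr (DFW2 (S h) 0) (dOr (DFW3 (S h) 0) (DFW4 (S v) (S h) 0))))).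
Definition DFree v x := dEx (dAnd (DFW (S v) 0) (dIn (S x) 0)).
Definition DSent x := dAnd (DFormula x) (dNot (dEx (dAnd (DVar 0) (DFree 0 (S x))))).
Definition DST v c t t' := dOr (dAnd (dEq t v) (dEq t' c)) (dAnd (dNot (dEq t v)) (dEq t' t)).
Definition DS1 v c x x' := dEx (dEx (dEx (dEx (dAnd (DST (4+v) (4+c) 3 1) (dAnd (DST (4+v) (4+c) 2 0)
   (dOr (dAnd (DEqc 3 2 (4+x)) (DEqc 1 0 (4+x'))) (dAnd (DMemc 3 2 (4+x)) (DMemc 1 0 (4+x'))))))))).
Definition DS2 h x x' := dEx (dEx (dAnd (DNegc 1 (2+x)) (dAnd (DNegc 0 (2+x')) (DPairIn (2+h) 1 0)))).
Definition DS3 h x x' := dEx (dEx (dEx (dEx (dAnd (DOrc 3 2 (4+x)) (dAnd (DOrc 1 0 (4+x'))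
   (dAnd (DPairIn (4+h) 3 1) (DPairIn (4+h) 2 0))))))).
Definition DS4 v x x' := dEx (dAnd (DExc (1+v) 0 (1+x)) (dEq (1+x') (1+x))).
Definition DS5 v h x x' := dEx (dEx (dEx (dAnd (DExc 2 1 (3+x)) (dAnd (dNot (dEq 2 (3+v)))
   (dAnd (DExc 2 0 (3+x')) (DPairIn (3+h) 1 0)))))).
Definition DSWC v c h w := dEx (dEx (dAnd (DPair 1 0 (2+w))
  (dOr (DS1 (2+v) (2+c) 1 0) (dOr (DS2 (2+h) 1 0) (dOr (DS3 (2+h) 1 0)
  (dOr (DS4 (2+v) 1 0) (DS5 (2+v) (2+h) 1 0))))))).
Definition DSW v c h := dAll (dImp (dIn 0 (S h)) (DSWC (S v) (S c) (S h) 0)).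
Definition DSubst v c x x' := dEx (dAnd (DSW (1+v) (1+c) 0) (DPairIn 0 (1+x) (1+x'))).
Definition DAT x := dEx (dEx (dEx (dEx (dAnd (DConst 3 1) (dAnd (DConst 2 0)
  (dOr (dAnd (DEqc 1 0 (4+x)) (dEq 3 2)) (dAnd (DMemc 1 0 (4+x)) (dIn 3 2)))))))).
Definition DBody x := dOr (DAT x)
  (dOr (dEx (dAnd (DNegc 0 (1+x)) (dNot (dInC 0 0))))
  (dOr (dEx (dEx (dAnd (DOrc 1 0 (2+x)) (dOr (dInC 1 0) (dInC 0 0)))))
       (dEx (dEx (dAnd (DExc 1 0 (2+x)) (dEx (dEx (dEx (dAnd (DConst 2 1)
          (dAnd (DSubst 4 1 3 0) (dInC 0 0))))))))))).
Definition DTcl p x := dAnd (dAnd (DSent x) (DFdl x p)) (DBody x).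

Ltac go := cbn [satD scons Nat.add].

Lemma sEmpty env c i : sat env c (DEmpty i) <-> is_empty E (env i).
Proof. reflexivity. Qed.
Lemma sUpair env c i j k : sat env c (DUpair i j k) <-> is_upair E (env i) (env j) (env k).
Proof. reflexivity. Qed.
Lemma sPair env c i j k : sat env c (DPair i j k) <-> is_pair E (env i) (env j) (env k).
Proof. unfold DPair. go. setoid_rewrite sUpair. go. reflexivity. Qed.
Lemma sSucc env c i j : sat env c (DSucc i j) <-> is_succ_of E (env i) (env j).
Proof. reflexivity. Qed.
Lemma sNum k : forall env c i, sat env c (DNum k i) <-> is_num E k (env i).
Proof.
  induction k; intros env c i; [reflexivity|]. simpl DNum. go.
  setoid_rewrite IHk. setoid_rewrite sSucc. go. reflexivity.
Qed.
Lemma sTrans env c i : sat env c (DTrans i) <-> transitive_set E (env i).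
Proof. reflexivity. Qed.
Lemma sNat env c i : sat env c (DNat i) <-> is_nat E (env i).
Proof.
  unfold DNat. go. setoid_rewrite sTrans. setoid_rewrite sEmpty. setoid_rewrite sSucc. go.
  reflexivity.
Qed.
Lemma sTag k env c i j : sat env c (DTag k i j) <-> tagged E k (env i) (env j).
Proof. unfold DTag. go. setoid_rewrite sNum. setoid_rewrite sPair. go. reflexivity. Qed.
Lemma sVar env c i : sat env c (DVar i) <-> var_code E (env i).
Proof. unfold DVar. go. setoid_rewrite sNat. setoid_rewrite sTag. go. reflexivity. Qed.
Lemma sConst env c i j : sat env c (DConst i j) <-> const_code E (env i) (env j).
Proof. apply sTag. Qed.
Lemma sTerm env c i : sat env c (DTerm i) <-> term_code E (env i).
Proof. unfold DTerm. go. setoid_rewrite sVar. setoid_rewrite sConst. go. reflexivity. Qed.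
Lemma sEqc env c t u x : sat env c (DEqc t u x) <-> eq_code E (env t) (env u) (env x).
Proof. unfold DEqc. go. setoid_rewrite sPair. setoid_rewrite sTag. go. reflexivity. Qed.
Lemma sMemc env c t u x : sat env c (DMemc t u x) <-> mem_code E (env t) (env u) (env x).
Proof. unfold DMemc. go. setoid_rewrite sPair. setoid_rewrite sTag. go. reflexivity. Qed.
Lemma sNegc env c y x : sat env c (DNegc y x) <-> neg_code E (env y) (env x).
Proof. apply sTag. Qed.
Lemma sOrc env c t u x : sat env c (DOrc t u x) <-> or_code E (env t) (env u) (env x).
Proof. unfold DOrc. go. setoid_rewrite sPair. setoid_rewrite sTag. go. reflexivity. Qed.
Lemma sExc env c t u x : sat env c (DExc t u x) <-> ex_code E (env t) (env u) (env x).
Proof. unfold DExc. go. setoid_rewrite sPair. setoid_rewrite sTag. go. reflexivity. Qed.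
Lemma sAtom env c x : sat env c (DAtom x) <-> atom_code E (env x).
Proof.
  unfold DAtom. go. setoid_rewrite sTerm. setoid_rewrite sEqc. setoid_rewrite sMemc. go.
  reflexivity.
Qed.
Lemma sPairIn env c h x d : sat env c (DPairIn h x d) <-> pair_in E (env h) (env x) (env d).
Proof. unfold DPairIn. go. setoid_rewrite sPair. go. reflexivity. Qed.

Lemma sDWC env c h w : sat env c (DWC' h w) <-> DWC E (env h) (env w).
Proof.
  unfold DWC', DWneg, DWor, DWex. go.
  setoid_rewrite sPair. setoid_rewrite sNat. setoid_rewrite sAtom. setoid_rewrite sNegc.
  setoid_rewrite sPairIn. setoid_rewrite sOrc. setoid_rewrite sVar. setoid_rewrite sExc.
  go. reflexivity.
Qed.
Lemma sDW env c h : sat env c (DDW h) <-> depth_witness E (env h).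
Proof. unfold DDW. go. setoid_rewrite sDWC. go. reflexivity. Qed.
Lemma sFdl env c x p : sat env c (DFdl x p) <-> form_depth_le E (env x) (env p).
Proof.
  unfold DFdl. go. setoid_rewrite sNat. setoid_rewrite sDW. setoid_rewrite sPairIn. go.
  reflexivity.
Qed.
Lemma sFormula env c x : sat env c (DFormula x) <-> is_formula E (env x).
Proof. unfold DFormula. go. setoid_rewrite sFdl. go. reflexivity. Qed.
Lemma sFW env c v h : sat env c (DFW v h) <-> free_witness E (env v) (env h).
Proof.
  unfold DFW, DFW1, DFW2, DFW3, DFW4. go.
  setoid_rewrite sEqc. setoid_rewrite sMemc. setoid_rewrite sNegc. setoid_rewrite sOrc.
  setoid_rewrite sExc. go. reflexivity.
Qed.
Lemma sFree env c v x : sat env c (DFree v x) <-> free_in E (env v) (env x).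
Proof. unfold DFree. go. setoid_rewrite sFW. go. reflexivity. Qed.
Lemma sSent env c x : sat env c (DSent x) <-> is_sentence E (env x).
Proof.
  unfold DSent. go. setoid_rewrite sFormula. setoid_rewrite sVar. setoid_rewrite sFree. go.
  reflexivity.
Qed.
Lemma sST env c v w t t' : sat env c (DST v w t t') <-> subst_term (env v) (env w) (env t) (env t').
Proof. reflexivity. Qed.
Lemma sSWC env c v w h z : sat env c (DSWC v w h z) <-> SWC E (env v) (env w) (env h) (env z).
Proof.
  unfold DSWC, DS1, DS2, DS3, DS4, DS5. go.
  setoid_rewrite sPair. setoid_rewrite sST. setoid_rewrite sEqc. setoid_rewrite sMemc.
  setoid_rewrite sNegc. setoid_rewrite sPairIn. setoid_rewrite sOrc. setoid_rewrite sExc.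
  go. reflexivity.
Qed.
Lemma sSW env c v w h : sat env c (DSW v w h) <-> subst_witness E (env v) (env w) (env h).
Proof. unfold DSW. go. setoid_rewrite sSWC. go. reflexivity. Qed.
Lemma sSubst env c v w x x' : sat env c (DSubst v w x x') <-> subst E (env v) (env w) (env x) (env x').
Proof. unfold DSubst. go. setoid_rewrite sSW. setoid_rewrite sPairIn. go. reflexivity. Qed.
Lemma sAT env c x : sat env c (DAT x) <-> AtomTrue E (env x).
Proof.
  unfold DAT. go. setoid_rewrite sConst. setoid_rewrite sEqc. setoid_rewrite sMemc. go.
  reflexivity.
Qed.
Lemma sBody env c x : sat env c (DBody x) <-> Body E (c 0) (env x).
Proof.
  unfold DBody. go. setoid_rewrite sAT. setoid_rewrite sNegc. setoid_rewrite sOrc.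
  setoid_rewrite sExc. setoid_rewrite sConst. setoid_rewrite sSubst. go. reflexivity.
Qed.
Lemma sTcl env c p x : sat env c (DTcl p x) <-> Tcl E (env p) (c 0) (env x).
Proof.
  unfold DTcl. go. setoid_rewrite sSent. setoid_rewrite sFdl. setoid_rewrite sBody.
  reflexivity.
Qed.

End Blocks.

Definition Fcl := DTcl 0 1.

Lemma wf_Fcl : wf 2 Fcl = true.
Proof. reflexivity. Qed.

Definition Cl {M : Type} (E : M -> M -> Prop) (np : M) (A : M -> Prop) : M -> Prop :=
  fun y => sat2 E (upd (fun _ => np) 0 y) (fun _ => A) (tr 2 Fcl).

Lemma Cl_spec {M : Type} (E : M -> M -> Prop) np A y : Cl E np A y <-> Tcl E np A y.
Proof.
  unfold Cl. rewrite (tr_ok E Fcl (upd (fun _ => np) 0 y) (scons np (scons y (fun _ => np))) (fun _ => A)).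
  - unfold Fcl. rewrite sTcl. reflexivity.
  - exact wf_Fcl.
  - intros i Hi. destruct i as [|[|i]]; simpl; try lia; reflexivity.
Qed.

Theorem corollary3p6 (M : Type) (E : M -> M -> Prop) (X : (M -> Prop) -> Prop) :
  (GB_plus E X \/ GB_minus E X) ->
  forall (phi : fm) (s : nat -> M),
    (exists x, code_cfm E (inst s nil phi) x) /\
    (forall x, code_cfm E (inst s nil phi) x ->
       (sat E s phi <-> T_Most E X x)).
Proof.
  intros H phi s.
  assert (HC : GB_common E X) by (destruct H as [[HC _]|[HC _]]; exact HC).
  destruct HC as [Hext [Hcls [Hpair [Hun [Hpow [Hfound [Hrep Hcomp]]]]]]].
  assert (Hempty : exists e, is_empty E e).
  { set (F0 := fun y => sat2 E (upd s 0 y) (fun _ => fun z => E z (s 0)) (gNot (gEq 0 0))).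
    assert (XF0 : X F0) by (apply Hcomp; intro; apply Hcls).
    destruct (Hrep F0 XF0) with (a := s 0) as [b Hb].
    - intros x y y' p p' Hp. exfalso. apply Hp. reflexivity.
    - exists b. intros z Hz. apply Hb in Hz. destruct Hz as [x [p [_ [Hp _]]]].
      apply Hp. reflexivity. }
  split.
  - exact (cfm_ex Hpair Hun Hempty _).
  - intros x Hx. split.
    + intro Hs.
      destruct (code_fdl Hext Hpair Hun Hempty _ _ Hx) as [np [Hnp Hfd]].
      destruct Hempty as [e He].
      set (A0 := fun z => E z e).
      set (T := Tit (Cl E np) A0 (md (inst s nil phi))).
      assert (Hdtc : depth_truth_class E T np).
      { apply (tit_dtc Hext Hpair Hun Hfound (ex_intro _ e He) (Cl E np) (Cl_spec E np) A0).
        exact Hnp. }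
      assert (HX : X T).
      { unfold T. generalize (md (inst s nil phi)). intro k. induction k; simpl.
        - unfold Cl. apply Hcomp. intro. apply Hcls.
        - unfold Cl. apply Hcomp. intro. exact IHk. }
      split. exact (code_sentence Hext Hpair Hun Hfound (ex_intro _ e He) _ _ _ Hx).
      exists np. split. exact (num_nat E Hext _ _ Hnp). split; auto.
      exists T. split; auto. split; auto.
      apply (agree Hext Hpair Hun Hfound (ex_intro _ e He) Hdtc phi s Hx Hfd). exact Hs.
    + intros [Hsent [p [Hp [Hfd [T [HX [HT Hdtc]]]]]]].
      apply (agree Hext Hpair Hun Hfound Hempty Hdtc phi s Hx Hfd). exact HT.
Qed.
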